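(* Let $f\colon[a,b]\to\mathbb{R}$ be Laplace integrable on $[a,b]$ and let $F(x)=\int_a^xf$ for $x\in[a,b]$. Then $LD_1F=f$ almost everywhere on $[a,b]$.
   Context: Laplace derivative: for $F$ Perron integrable near $x$, $LD_1F(x)$ is the common value, when both exist and are equal, of $\lim_{s\to\infty}s^2\int_0^\delta e^{-st}[F(x+t)-F(x)]dt$ and $\lim_{s\to\infty}(-s^2)\int_0^\delta e^{-st}[F(x-t)-F(x)]dt$ for some $\delta>0$ (one-sided at endpoints). Lower/upper derivates $\underline{LD}_1,\overline{LD}_1$ use $\liminf$/$\limsup$, minimum/maximum over the two sides. Laplace integral: a major function of $f$ is a continuous $U$ on $[a,b]$ with $\underline{LD}_1U\geqslant f$ and $\underline{LD}_1U>-\infty$ everywhere; a minor function is a continuous $V$ with $\overline{LD}_1V\leqslant f$ and $\overline{LD}_1V<\infty$ everywhere; $f$ is Laplace integrable if $\sup_V(V(b)-V(a))=\inf_U(U(b)-U(a))$ is finite, the value being $\int_a^bf$. *)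

(* Defs.v *)
From Stdlib Require Import Reals ClassicalEpsilon.
From Coquelicot Require Import Coquelicot.
Open Scope R_scope.

Fixpoint rsum (g : R -> R) (n : nat) (x t : nat -> R) : R :=
  match n with
  | O => 0
  | S m => rsum g m x t + g (t m) * (x (S m) - x m)
  end.

Definition fine_division (delta : R -> R) (c d : R) (n : nat) (x t : nat -> R) : Prop :=
  x O = c /\ x n = d /\
  forall i : nat, (i < n)%nat ->
    x i <= t i <= x (S i) /\ t i - delta (t i) < x i /\ x (S i) < t i + delta (t i).

(* g is Perron (Henstock–Kurzweil) integrable on [c,d] with integral I *)
Definition is_perron (g : R -> R) (c d I : R) : Prop :=
  c <= d /\
  forall eps : R, 0 < eps ->
    exists delta : R -> R,
      (forall t, c <= t <= d -> 0 < delta t) /\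
      forall (n : nat) (x t : nat -> R),
        fine_division delta c d n x t -> Rabs (rsum g n x t - I) < eps.

Definition perron_integrable (g : R -> R) (c d : R) : Prop :=
  exists I, is_perron g c d I.

Definition perron_int (g : R -> R) (c d : R) : R :=
  epsilon (inhabits 0) (fun I => is_perron g c d I).

Definition perron_near (a b : R) (F : R -> R) (x delta : R) : Prop :=
  0 < delta /\
  (x < b -> x + delta <= b /\ perron_integrable F x (x + delta)) /\
  (a < x -> a <= x - delta /\ perron_integrable F (x - delta) x).

Definition lap_right (F : R -> R) (x delta s : R) : R :=
  s ^ 2 * perron_int (fun t => exp (- (s * t)) * (F (x + t) - F x)) 0 delta.

Definition lap_left (F : R -> R) (x delta s : R) : R :=
  - (s ^ 2) * perron_int (fun t => exp (- (s * t)) * (F (x - t) - F x)) 0 delta.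

Definition LD1 (a b : R) (F : R -> R) (x L : R) : Prop :=
  exists delta : R,
    perron_near a b F x delta /\
    (x < b -> is_lim (lap_right F x delta) p_infty (Finite L)) /\
    (a < x -> is_lim (lap_left F x delta) p_infty (Finite L)).

Definition liminf_pinfty (h : R -> R) : Rbar :=
  Rbar_lub (fun y => exists M : R, y = Glb_Rbar (fun z => exists s, M <= s /\ z = h s)).
Definition limsup_pinfty (h : R -> R) : Rbar :=
  Rbar_glb (fun y => exists M : R, y = Lub_Rbar (fun z => exists s, M <= s /\ z = h s)).

Definition Rbar_maxi (u v : Rbar) : Rbar := Rbar_opp (Rbar_min (Rbar_opp u) (Rbar_opp v)).

Definition LD1_lower (a b : R) (F : R -> R) (x delta : R) : Rbar :=
  if Rlt_dec x b then
    (if Rlt_dec a x then Rbar_min (liminf_pinfty (lap_right F x delta))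
                                  (liminf_pinfty (lap_left F x delta))
     else liminf_pinfty (lap_right F x delta))
  else liminf_pinfty (lap_left F x delta).

Definition LD1_upper (a b : R) (F : R -> R) (x delta : R) : Rbar :=
  if Rlt_dec x b then
    (if Rlt_dec a x then Rbar_maxi (limsup_pinfty (lap_right F x delta))
                                  (limsup_pinfty (lap_left F x delta))
     else limsup_pinfty (lap_right F x delta))
  else limsup_pinfty (lap_left F x delta).

Definition continuous_on_interval (a b : R) (U : R -> R) : Prop :=
  forall x, a <= x <= b ->
    forall eps, 0 < eps -> exists d, 0 < d /\
      forall y, a <= y <= b -> Rabs (y - x) < d -> Rabs (U y - U x) < eps.

Definition major_function (a b : R) (f U : R -> R) : Prop :=
  continuous_on_interval a b U /\
  forall x, a <= x <= b ->
    exists delta, perron_near a b U x delta /\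
      Rbar_le (Finite (f x)) (LD1_lower a b U x delta) /\
      Rbar_lt m_infty (LD1_lower a b U x delta).

Definition minor_function (a b : R) (f V : R -> R) : Prop :=
  continuous_on_interval a b V /\
  forall x, a <= x <= b ->
    exists delta, perron_near a b V x delta /\
      Rbar_le (LD1_upper a b V x delta) (Finite (f x)) /\
      Rbar_lt (LD1_upper a b V x delta) p_infty.

Definition is_laplace (a b : R) (f : R -> R) (I : R) : Prop :=
  Lub_Rbar (fun y => exists V, minor_function a b f V /\ y = V b - V a) = Finite I /\
  Glb_Rbar (fun y => exists U, major_function a b f U /\ y = U b - U a) = Finite I.

Definition laplace_integrable (a b : R) (f : R -> R) : Prop :=
  exists I, is_laplace a b f I.

Definition laplace_int (a b : R) (f : R -> R) : R :=
  epsilon (inhabits 0) (fun I => is_laplace a b f I).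

Fixpoint lensum (lo hi : nat -> R) (n : nat) : R :=
  match n with O => 0 | S m => lensum lo hi m + (hi m - lo m) end.

Definition null_set (N : R -> Prop) : Prop :=
  forall eps, 0 < eps ->
    exists lo hi : nat -> R,
      (forall n, lo n <= hi n) /\
      (forall n, lensum lo hi n <= eps) /\
      (forall x, N x -> exists n, lo n < x < hi n).

(* Main.v *)
Require Import Defs.
From Stdlib Require Import Reals Lra Lia ZArith ClassicalEpsilon Classical Cantor.
From Coquelicot Require Import Coquelicot.
Open Scope R_scope.

Definition clamp (c d x : R) := Rmax c (Rmin d x).

Lemma clamp_id c d x : c <= x <= d -> clamp c d x = x.
Proof. intros H; unfold clamp, Rmax, Rmin; repeat destruct Rle_dec; lra. Qed.

Lemma clamp_in c d x : c <= d -> c <= clamp c d x <= d.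
Proof. intros H; unfold clamp, Rmax, Rmin; repeat destruct Rle_dec; lra. Qed.

Lemma clamp_lip c d x y : c <= d -> Rabs (clamp c d x - clamp c d y) <= Rabs (x - y).
Proof.
  intros H; unfold clamp, Rmax, Rmin; repeat destruct Rle_dec;
  unfold Rabs; repeat destruct Rcase_abs; lra.
Qed.

Lemma cont_clamp c d (U : R -> R) : c <= d -> continuous_on_interval c d U ->
  forall z, continuous (fun x => U (clamp c d x)) z.
Proof.
  intros Hcd HU z. apply continuity_pt_filterlim.
  intros eps Heps.
  destruct (HU (clamp c d z) (clamp_in c d z Hcd) eps Heps) as [r [Hr Hr2]].
  exists r; split; auto.
  intros y [_ Hy]. unfold R_dist in *. simpl in *. unfold R_dist in Hy.
  apply Hr2. apply clamp_in; auto.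
  eapply Rle_lt_trans. apply clamp_lip; auto. auto.
Qed.

Lemma ex_RInt_cont (h : R -> R) u v : (forall z, continuous h z) -> ex_RInt h u v.
Proof. intros Hh. apply (ex_RInt_continuous (V := R_CompleteNormedModule)). intros; apply Hh. Qed.

Lemma fine_mono delta c d n x t : fine_division delta c d n x t ->
  forall i, (i <= n)%nat -> c <= x i.
Proof.
  intros [H0 [Hn H]] i. induction i; intros Hi.
  - lra.
  - assert (c <= x i) by (apply IHi; lia).
    destruct (H i ltac:(lia)) as [[A B] _]. lra.
Qed.

Lemma fine_mono2 delta c d n x t : fine_division delta c d n x t ->
  forall k, (k <= n)%nat -> x (n - k)%nat <= d.
Proof.
  intros [H0 [Hn H]] k. induction k; intros Hk.
  - replace (n - 0)%nat with n by lia. lra.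
  - assert (x (n - k)%nat <= d) by (apply IHk; lia).
    destruct (H (n - S k)%nat ltac:(lia)) as [[A B] _].
    replace (S (n - S k)) with (n - k)%nat in B by lia. lra.
Qed.

Lemma fine_tag delta c d n x t : fine_division delta c d n x t ->
  forall i, (i < n)%nat -> c <= x i <= t i /\ t i <= x (S i) <= d.
Proof.
  intros Hf i Hi.
  pose proof (fine_mono _ _ _ _ _ _ Hf i ltac:(lia)).
  pose proof (fine_mono2 _ _ _ _ _ _ Hf (n - S i) ltac:(lia)).
  replace (n - (n - S i))%nat with (S i) in H0 by lia.
  destruct Hf as [_ [_ H1]]. destruct (H1 i Hi) as [[A B] _]. lra.
Qed.

Lemma fine_weaken d1 d2 c d n x t : (forall u, c <= u <= d -> d1 u <= d2 u) ->
  fine_division d1 c d n x t -> fine_division d2 c d n x t.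
Proof.
  intros Hle Hf. pose proof (fine_tag _ _ _ _ _ _ Hf) as Ht.
  destruct Hf as [H0 [Hn H]]. split; [auto|split;[auto|]].
  intros i Hi. destruct (H i Hi) as [A [B C]]. specialize (Ht i Hi).
  specialize (Hle (t i) ltac:(lra)). lra.
Qed.

Lemma cousin delta c d : c <= d -> (forall u, c <= u <= d -> 0 < delta u) ->
  exists n x t, fine_division delta c d n x t.
Proof.
  intros Hcd Hpos.
  set (Sd := fun z => c <= z <= d /\ exists n x t, fine_division delta c z n x t).
  assert (HS : Sd c).
  { split; [lra|]. exists O, (fun _ => c), (fun _ => c).
    split; [auto|split;[auto|]]. intros i Hi; lia. }
  assert (Hb : bound Sd). { exists d. intros z [Hz _]. lra. }
  destruct (completeness Sd Hb (ex_intro _ c HS)) as [m [Hub Hlub]].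
  assert (Hcm : c <= m) by (apply Hub; auto).
  assert (Hmd : m <= d) by (apply Hlub; intros z [Hz _]; lra).
  set (dm := delta m). assert (Hdm : 0 < dm) by (apply Hpos; lra).
  assert (Hex : exists z, Sd z /\ m - dm < z).
  { apply NNPP; intro Hn.
    assert (m <= m - dm); [|lra].
    apply Hlub. intros z Hz. destruct (Rle_dec z (m - dm)); auto.
    exfalso; apply Hn; exists z; split; auto; lra. }
  destruct Hex as [z [[Hz [n [x [t Hf]]]] Hzm]].
  assert (Hzm2 : z <= m) by (apply Hub; split; auto; exists n, x, t; auto).
  set (z' := Rmin d (m + dm / 2)).
  assert (Hf' : fine_division delta c z' (S n)
     (fun i => if Nat.leb i n then x i else z')
     (fun i => if Nat.ltb i n then t i else m)).
  { destruct Hf as [H0 [Hn H]].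
    split; [simpl; auto|]. split.
    { replace (Nat.leb (S n) n) with false; auto. symmetry; apply Nat.leb_gt; lia. }
    intros i Hi. destruct (Nat.eq_dec i n) as [->|Hne].
    - rewrite Nat.leb_refl, Nat.ltb_irrefl.
      replace (Nat.leb (S n) n) with false by (symmetry; apply Nat.leb_gt; lia).
      unfold z', Rmin; destruct Rle_dec; fold dm; lra.
    - replace (Nat.leb i n) with true by (symmetry; apply Nat.leb_le; lia).
      replace (Nat.leb (S i) n) with true by (symmetry; apply Nat.leb_le; lia).
      replace (Nat.ltb i n) with true by (symmetry; apply Nat.ltb_lt; lia).
      apply H; lia. }
  assert (HSz' : Sd z').
  { split. unfold z', Rmin; destruct Rle_dec; lra. exists (S n); eauto. }
  assert (z' <= m) by (apply Hub; auto).
  assert (Hz'd : z' = d). { unfold z', Rmin in *; destruct Rle_dec; lra. }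
  rewrite Hz'd in Hf'. eauto.
Qed.

Lemma perron_unique g c d I1 I2 : is_perron g c d I1 -> is_perron g c d I2 -> I1 = I2.
Proof.
  intros [Hcd H1] [_ H2].
  apply NNPP; intro Hne.
  set (e := Rabs (I1 - I2) / 2).
  assert (He : 0 < e) by (unfold e; assert (I1 - I2 <> 0) by lra; pose proof (Rabs_pos_lt _ H); lra).
  destruct (H1 e He) as [d1 [Hd1 A1]]. destruct (H2 e He) as [d2 [Hd2 A2]].
  destruct (cousin (fun u => Rmin (d1 u) (d2 u)) c d Hcd) as [n [x [t Hf]]].
  { intros u Hu. apply Rmin_glb_lt; auto. }
  specialize (A1 n x t (fine_weaken _ _ _ _ _ _ _ (fun u _ => Rmin_l _ _) Hf)).
  specialize (A2 n x t (fine_weaken _ _ _ _ _ _ _ (fun u _ => Rmin_r _ _) Hf)).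
  assert (Rabs (I1 - I2) <= Rabs (rsum g n x t - I1) + Rabs (rsum g n x t - I2)).
  { replace (I1 - I2) with (-(rsum g n x t - I1) + (rsum g n x t - I2)) by ring.
    eapply Rle_trans. apply Rabs_triang. rewrite Rabs_Ropp. lra. }
  unfold e in *; lra.
Qed.

Lemma rsum_ext g1 g2 n x t : (forall i, (i < n)%nat -> g1 (t i) = g2 (t i)) ->
  rsum g1 n x t = rsum g2 n x t.
Proof.
  induction n; intros H; simpl; auto. rewrite IHn by (intros; apply H; lia).
  rewrite H by lia. auto.
Qed.

Lemma perron_RInt (g h : R -> R) c d : c <= d -> (forall z, continuous h z) ->
  (forall u, c <= u <= d -> g u = h u) -> is_perron g c d (RInt h c d).
Proof.
  intros Hcd Hh Hgh. split; auto. intros eps Heps.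
  set (e := eps / (d - c + 1)).
  assert (He : 0 < e) by (unfold e; apply Rdiv_lt_0_compat; lra).
  assert (Hc : forall u, exists r, 0 < r /\ forall v, Rabs (v - u) < r -> Rabs (h v - h u) < e).
  { intros u. pose proof (proj2 (continuity_pt_filterlim h u) (Hh u)) as Hu.
    destruct (Hu e He) as [r [Hr Hr2]]. exists r; split; auto.
    intros v Hv. destruct (Req_dec v u) as [->|Hne].
    { rewrite Rminus_eq_0, Rabs_R0; lra. }
    apply (Hr2 v). split; [unfold D_x, no_cond; split; auto|]. simpl; unfold R_dist; auto. }
  set (delta := fun u => proj1_sig (constructive_indefinite_description _ (Hc u))).
  assert (Hdelta : forall u, 0 < delta u /\ forall v, Rabs (v - u) < delta u -> Rabs (h v - h u) < e).
  { intros u. unfold delta. destruct constructive_indefinite_description; simpl; auto. }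
  exists delta. split. intros; apply Hdelta.
  intros n x t Hf.
  assert (Hex : forall u v, ex_RInt h u v) by (intros; apply ex_RInt_cont; auto).
  assert (Key : forall i, (i <= n)%nat -> Rabs (rsum g i x t - RInt h (x O) (x i)) <= e * (x i - x O)).
  { induction i; intros Hi.
    - simpl. rewrite RInt_point. unfold zero; simpl. rewrite Rminus_0_r, Rabs_R0. lra.
    - specialize (IHi ltac:(lia)). simpl.
      destruct (fine_tag _ _ _ _ _ _ Hf i ltac:(lia)) as [T1 T2].
      destruct Hf as [_ [_ Hfi]]. destruct (Hfi i ltac:(lia)) as [_ [F1 F2]].
      rewrite <- (RInt_Chasles h (x O) (x i) (x (S i))) by auto.
      unfold plus; simpl.
      assert (Hloc : Rabs (g (t i) * (x (S i) - x i) - RInt h (x i) (x (S i))) <= e * (x (S i) - x i)).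
      { rewrite Hgh by lra.
        replace (h (t i) * (x (S i) - x i)) with (RInt (fun _ => h (t i)) (x i) (x (S i)))
          by (rewrite RInt_const; unfold scal; simpl; unfold mult; simpl; ring).
        assert (E : RInt (fun _ => h (t i)) (x i) (x (S i)) - RInt h (x i) (x (S i)) =
                    RInt (fun v => h (t i) - h v) (x i) (x (S i))).
        { rewrite (RInt_minus (fun _ => h (t i)) h) by (auto; apply ex_RInt_const). reflexivity. }
        rewrite E. rewrite Rmult_comm.
        apply abs_RInt_le_const. lra.
        apply (ex_RInt_minus (fun _ => h (t i)) h); auto; apply ex_RInt_const.
        intros v Hv. rewrite <- Rabs_Ropp. replace (- (h (t i) - h v)) with (h v - h (t i)) by ring.
        left. apply Hdelta. unfold Rabs; destruct Rcase_abs; lra. }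
      eapply Rle_trans.
      2: { assert (e * (x i - x O) + e * (x (S i) - x i) = e * (x (S i) - x O)) by ring.
           rewrite <- H. apply Rplus_le_compat; [apply IHi | apply Hloc]. }
      replace (rsum g i x t + g (t i) * (x (S i) - x i) - (RInt h (x 0%nat) (x i) + RInt h (x i) (x (S i))))
        with ((rsum g i x t - RInt h (x 0%nat) (x i)) + (g (t i) * (x (S i) - x i) - RInt h (x i) (x (S i)))) by ring.
      apply Rabs_triang. }
  specialize (Key n (le_n n)). destruct Hf as [H0 [Hn _]]. rewrite H0, Hn in Key.
  eapply Rle_lt_trans. apply Key.
  unfold e. apply Rlt_le_trans with (eps / (d - c + 1) * (d - c + 1)).
  apply Rmult_lt_compat_l; [auto|lra].
  field_simplify; lra.
Qed.

Lemma perron_int_RInt (g h : R -> R) c d : c <= d -> (forall z, continuous h z) ->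
  (forall u, c <= u <= d -> g u = h u) -> perron_int g c d = RInt h c d.
Proof.
  intros Hcd Hh Hgh. pose proof (perron_RInt g h c d Hcd Hh Hgh) as HP.
  unfold perron_int. apply (perron_unique g c d); auto.
  apply epsilon_spec. eauto.
Qed.

Lemma perron_integrable_cont (g h : R -> R) c d : c <= d -> (forall z, continuous h z) ->
  (forall u, c <= u <= d -> g u = h u) -> perron_integrable g c d.
Proof. intros; eexists; apply perron_RInt; eauto. Qed.

Definition Kr (G : R -> R) (x s d : R) :=
  RInt (fun t => exp (-(s*t)) * (G (x+t) - G x)) 0 d.
Definition LR (G : R -> R) (x d s : R) := s ^ 2 * Kr G x s d.

Definition gcont (G : R -> R) := forall z, continuous G z.

Lemma cont_kernel (G : R -> R) s x : gcont G ->
  gcont (fun t => exp (-(s*t)) * (G (x+t) - G x)).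
Proof.
  intros HG z.
  apply (continuous_mult (K := R_AbsRing) (fun t => exp (-(s*t))) (fun t => G (x+t) - G x)).
  - apply continuous_exp_comp.
    apply (continuous_opp (K := R_AbsRing) (V := R_NormedModule) (fun t => s * t)).
    apply (continuous_mult (K := R_AbsRing) (fun _ => s) (fun t => t)).
    apply continuous_const. apply continuous_id.
  - apply (continuous_minus (K := R_AbsRing) (V := R_NormedModule) (fun t => G (x+t)) (fun _ => G x)).
    apply (continuous_comp (fun t => x + t) G).
    apply (continuous_plus (K := R_AbsRing) (V := R_NormedModule) (fun _ => x) (fun t => t)).
    apply continuous_const. apply continuous_id. apply HG.
    apply continuous_const.
Qed.

Lemma gcont_clamp a b U : a <= b -> continuous_on_interval a b U -> gcont (fun y => U (clamp a b y)).
Proof. intros H H0 z; apply cont_clamp; auto. Qed.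

Lemma gcont_refl (G : R -> R) : gcont G -> gcont (fun y => - G (- y)).
Proof.
  intros HG z.
  apply (continuous_opp (K := R_AbsRing) (V := R_NormedModule) (fun y => G (-y))).
  apply (continuous_comp (fun y => - y) G).
  apply (continuous_opp (K := R_AbsRing) (V := R_NormedModule) (fun t => t)). apply continuous_id.
  apply HG.
Qed.

Lemma gcont_minus (G1 G2 : R -> R) : gcont G1 -> gcont G2 -> gcont (fun y => G1 y - G2 y).
Proof.
  intros H1 H2 z. apply (continuous_minus (K := R_AbsRing) (V := R_NormedModule) G1 G2); auto.
Qed.

Lemma gcont_plus (G1 G2 : R -> R) : gcont G1 -> gcont G2 -> gcont (fun y => G1 y + G2 y).
Proof.
  intros H1 H2 z. apply (continuous_plus (K := R_AbsRing) (V := R_NormedModule) G1 G2); auto.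
Qed.

Lemma gcont_lin (c0 c1 : R) : gcont (fun y => c0 + c1 * y).
Proof.
  intros z. apply (continuous_plus (K := R_AbsRing) (V := R_NormedModule) (fun _ => c0) (fun y => c1 * y)).
  apply continuous_const.
  apply (continuous_mult (K := R_AbsRing) (fun _ => c1) (fun t => t)).
  apply continuous_const. apply continuous_id.
Qed.

Lemma lap_right_LR a b U x d s : a <= b -> continuous_on_interval a b U ->
  a <= x -> 0 <= d -> x + d <= b ->
  lap_right U x d s = LR (fun y => U (clamp a b y)) x d s.
Proof.
  intros Hab HU Hx Hd Hxd. unfold lap_right, LR, Kr. f_equal.
  apply (perron_int_RInt _ _ 0 d Hd (cont_kernel _ s x (gcont_clamp a b U Hab HU))).
  intros u Hu. rewrite !clamp_id by lra. auto.
Qed.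

Lemma lap_left_LR a b U x d s : a <= b -> continuous_on_interval a b U ->
  a <= x - d -> 0 <= d -> x <= b ->
  lap_left U x d s = LR (fun y => - U (clamp a b (- y))) (- x) d s.
Proof.
  intros Hab HU Hx Hd Hxd. unfold lap_left, LR, Kr.
  set (Ul := fun y => - U (clamp a b (- y))).
  assert (HUl : gcont Ul) by (unfold Ul; apply (gcont_refl (fun y => U (clamp a b y))); apply gcont_clamp; auto).
  assert (Hk := cont_kernel Ul s (-x) HUl).
  rewrite (perron_int_RInt _ (fun t => - (exp (-(s*t)) * (Ul (-x+t) - Ul (-x)))) 0 d Hd).
  - rewrite (RInt_opp (V:=R_CompleteNormedModule) (fun t => (exp (-(s*t)) * (Ul (-x+t) - Ul (-x))))).
    unfold opp; simpl. unfold Ul; ring. apply ex_RInt_cont; auto.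
  - intro z. apply (continuous_opp (K := R_AbsRing) (V := R_NormedModule)
      (fun t => (exp (-(s*t)) * (Ul (-x+t) - Ul (-x))))). apply Hk.
  - intros u Hu. unfold Ul. replace (-(-x+u)) with (x-u) by ring. rewrite Ropp_involutive.
    rewrite !clamp_id by lra. ring.
Qed.

Definition J (s d : R) := RInt (fun t => exp (-(s*t)) * t) 0 d.

Lemma gcont_J s : gcont (fun t => exp (-(s*t)) * t).
Proof.
  intros z. apply (continuous_mult (K := R_AbsRing) (fun t => exp (-(s*t))) (fun t => t)).
  apply continuous_exp_comp.
  apply (continuous_opp (K := R_AbsRing) (V := R_NormedModule) (fun t => s * t)).
  apply (continuous_mult (K := R_AbsRing) (fun _ => s) (fun t => t)).
  apply continuous_const. apply continuous_id. apply continuous_id.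
Qed.

Lemma J_formula s d : 0 < s -> s ^ 2 * J s d = 1 - exp (-(s*d)) * (1 + s*d).
Proof.
  intros Hs. unfold J.
  set (P := fun t => - (exp (-(s*t)) * (1 + s*t)) / s^2).
  assert (H : is_RInt (fun t => exp (-(s*t)) * t) 0 d (minus (P d) (P 0))).
  { apply (is_RInt_derive (V := R_CompleteNormedModule) P). unfold P.
    - intros x _. auto_derive; auto. field. lra.
    - intros x _. apply gcont_J. }
  rewrite (is_RInt_unique _ _ _ _ H). unfold minus, plus, opp, P; simpl.
  replace (s * 0) with 0 by ring. rewrite Ropp_0, exp_0. field. lra.
Qed.

Lemma exp_cube u : 0 <= u -> u ^ 3 / 27 <= exp u.
Proof.
  intros Hu. replace u with (u/3 + u/3 + u/3) at 2 by field.
  rewrite !exp_plus.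
  assert (1 + u/3 <= exp (u/3)).
  { destruct (Req_dec u 0) as [->|Hn]. replace (0/3) with 0 by field. rewrite exp_0; lra.
    left. apply exp_ineq1. lra. }
  assert (0 <= u / 3) by lra.
  replace (u ^ 3 / 27) with ((u/3) * (u/3) * (u/3)) by field.
  apply Rmult_le_compat; try lra. apply Rmult_le_pos; lra.
  apply Rmult_le_compat; lra.
Qed.

Lemma sJ_le1 s d : 0 < s -> 0 <= d -> s ^ 2 * J s d <= 1.
Proof.
  intros Hs Hd. rewrite J_formula by auto.
  pose proof (exp_pos (-(s*d))). assert (0 <= s * d) by (apply Rmult_le_pos; lra).
  assert (0 <= exp (- (s * d)) * (1 + s * d)) by (apply Rmult_le_pos; lra). lra.
Qed.

Lemma sJ_large d : 0 < d -> exists M, 0 < M /\ forall s, M <= s -> 1/2 <= s ^ 2 * J s d.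
Proof.
  intros Hd. exists (10 / d). split. apply Rdiv_lt_0_compat; lra.
  intros s Hs. assert (Hs0 : 0 < s). { eapply Rlt_le_trans; [|apply Hs]. apply Rdiv_lt_0_compat; lra. }
  rewrite J_formula by auto.
  set (u := s * d). assert (Hu : 10 <= u).
  { unfold u. apply Rmult_le_reg_r with (/ d). apply Rinv_0_lt_compat; lra.
    replace (s * d * / d) with s by (field; lra). unfold Rdiv in Hs. lra. }
  pose proof (exp_cube u ltac:(lra)).
  rewrite exp_Ropp.
  assert (Hpos : 0 < exp u) by apply exp_pos.
  assert ((1 + u) / exp u <= 1/2).
  { apply Rmult_le_reg_r with (exp u); auto. field_simplify; try lra.
    assert (u ^ 3 / 27 >= 2 * (1 + u)).
    { assert (u^3 = u * u * u) by ring. rewrite H0.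
      assert (u * u >= 100) by nra. nra. }
    lra. }
  unfold Rdiv in H0. rewrite Rmult_comm. lra.
Qed.

Lemma ex_RInt_kernel (G : R -> R) x s u v : gcont G ->
  ex_RInt (fun t => exp (-(s*t)) * (G (x+t) - G x)) u v.
Proof. intros HG. apply ex_RInt_cont. apply cont_kernel; auto. Qed.

Lemma LR_minus (G1 G2 : R -> R) x d s : gcont G1 -> gcont G2 ->
  LR (fun y => G1 y - G2 y) x d s = LR G1 x d s - LR G2 x d s.
Proof.
  intros H1 H2. unfold LR, Kr. rewrite <- Rmult_minus_distr_l. f_equal.
  rewrite <- (RInt_minus (V := R_CompleteNormedModule)) by (apply ex_RInt_kernel; auto).
  apply RInt_ext. intros t _. unfold minus, plus, opp; simpl. ring.
Qed.

Lemma LR_plus (G1 G2 : R -> R) x d s : gcont G1 -> gcont G2 ->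
  LR (fun y => G1 y + G2 y) x d s = LR G1 x d s + LR G2 x d s.
Proof.
  intros H1 H2. unfold LR, Kr. rewrite <- Rmult_plus_distr_l. f_equal.
  rewrite <- (RInt_plus (V := R_CompleteNormedModule)) by (apply ex_RInt_kernel; auto).
  apply RInt_ext. intros t _. unfold plus; simpl. ring.
Qed.

Lemma LR_lin c0 c1 x d s : LR (fun y => c0 + c1 * y) x d s = c1 * (s ^ 2 * J s d).
Proof.
  unfold LR, Kr, J.
  rewrite (RInt_ext _ (fun t => scal c1 (exp (-(s*t)) * t))).
  rewrite (RInt_scal (V := R_CompleteNormedModule)). unfold scal; simpl; unfold mult; simpl. ring.
  apply ex_RInt_cont, gcont_J.
  intros t _. unfold scal; simpl; unfold mult; simpl. ring.
Qed.

Lemma Kr_ge0 (G : R -> R) x s d : gcont G -> 0 <= d ->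
  (forall t, 0 <= t <= d -> 0 <= G (x+t) - G x) -> 0 <= Kr G x s d.
Proof.
  intros HG Hd Hb. unfold Kr.
  apply Rle_trans with (RInt (fun _ => 0) 0 d).
  rewrite RInt_const. unfold scal; simpl; unfold mult; simpl. lra.
  apply RInt_le; auto. apply ex_RInt_const. apply ex_RInt_kernel; auto.
  intros t Ht. apply Rmult_le_pos. left; apply exp_pos. apply Hb; lra.
Qed.

Lemma Kr_le0 (G : R -> R) x s d : gcont G -> 0 <= d ->
  (forall t, 0 <= t <= d -> G (x+t) - G x <= 0) -> Kr G x s d <= 0.
Proof.
  intros HG Hd Hb. unfold Kr.
  apply Rle_trans with (RInt (fun _ => 0) 0 d).
  apply RInt_le; auto. apply ex_RInt_kernel; auto. apply ex_RInt_const.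
  intros t Ht. assert (G (x+t) - G x <= 0) by (apply Hb; lra).
  pose proof (exp_pos (-(s*t))). nra.
  rewrite RInt_const. unfold scal; simpl; unfold mult; simpl. lra.
Qed.

Lemma LR_le0 (G : R -> R) x s d : gcont G -> 0 <= d ->
  (forall t, 0 <= t <= d -> G (x+t) - G x <= 0) -> LR G x d s <= 0.
Proof.
  intros. unfold LR. pose proof (Kr_le0 G x s d H H0 H1).
  assert (0 <= s ^ 2) by (apply pow2_ge_0). nra.
Qed.

Lemma LR_bounds (G : R -> R) x d s eta : gcont G -> 0 <= d -> 0 < s -> 0 <= eta ->
  (forall t, 0 <= t <= d -> 0 <= G (x+t) - G x <= eta * t) ->
  0 <= LR G x d s <= eta.
Proof.
  intros HG Hd Hs He Hb. unfold LR.
  assert (0 <= s ^ 2) by (apply pow2_ge_0).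
  split.
  - apply Rmult_le_pos; auto. apply Kr_ge0; auto. intros t Ht; apply Hb; auto.
  - assert (Kr G x s d <= eta * J s d).
    { unfold Kr, J. rewrite <- (RInt_scal (V := R_CompleteNormedModule)).
      apply RInt_le; auto. apply ex_RInt_kernel; auto.
      apply (ex_RInt_scal (V := R_NormedModule)). apply ex_RInt_cont, gcont_J.
      intros t Ht. unfold scal; simpl; unfold mult; simpl.
      destruct (Hb t ltac:(lra)). pose proof (exp_pos (-(s*t))). nra.
      apply ex_RInt_cont, gcont_J. }
    pose proof (sJ_le1 s d Hs Hd).
    assert (s ^ 2 * Kr G x s d <= eta * (s ^ 2 * J s d)) by nra.
    nra.
Qed.

Lemma cont_bound (h : R -> R) u v : gcont h -> u <= v ->
  exists B, 0 <= B /\ forall t, u <= t <= v -> Rabs (h t) <= B.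
Proof.
  intros Hh Huv.
  destruct (continuity_ab_maj (fun t => Rabs (h t)) u v Huv) as [m [Hm _]].
  { intros c _. apply continuity_pt_filterlim.
    apply (continuous_comp h Rabs). apply Hh. apply continuous_Rabs. }
  exists (Rabs (h m)). split. apply Rabs_pos. auto.
Qed.

Lemma LR_delta (G : R -> R) x d1 d2 : gcont G -> 0 < d1 -> 0 < d2 ->
  forall eta, 0 < eta -> exists M, forall s, M <= s -> Rabs (LR G x d1 s - LR G x d2 s) < eta.
Proof.
  intros HG.
  assert (Main : forall e1 e2, 0 < e1 -> e1 <= e2 -> forall eta, 0 < eta ->
    exists M, forall s, M <= s -> Rabs (LR G x e1 s - LR G x e2 s) < eta).
  { intros e1 e2 H1 H12 eta Heta.
    destruct (cont_bound (fun t => G (x+t) - G x) e1 e2) as [B [HB HBb]]; auto.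
    { apply gcont_minus. intros z. apply (continuous_comp (fun t => x + t) G).
      apply (continuous_plus (K := R_AbsRing) (V := R_NormedModule) (fun _ => x) (fun t => t)).
      apply continuous_const. apply continuous_id. apply HG.
      intros z; apply continuous_const. }
    set (C := 27 * (e2 - e1) * B).
    assert (HC : 0 <= C). { unfold C. apply Rmult_le_pos; lra. }
    exists (Rmax 1 (C / (e1 ^ 3 * eta) + 1)). intros s Hs.
    assert (Hs1 : 1 <= s) by (eapply Rle_trans; [apply Rmax_l|apply Hs]).
    assert (Hs2 : C / (e1 ^ 3 * eta) + 1 <= s) by (eapply Rle_trans; [apply Rmax_r|apply Hs]).
    unfold LR, Kr.
    set (K := fun t : R => exp (- (s * t)) * (G (x + t) - G x)).
    rewrite <- (RInt_Chasles (V := R_CompleteNormedModule) K 0 e1 e2) by (apply ex_RInt_kernel; auto).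
    change (plus (RInt K 0 e1) (RInt K e1 e2)) with (RInt K 0 e1 + RInt K e1 e2).
    replace (s ^ 2 * RInt K 0 e1 - s ^ 2 * (RInt K 0 e1 + RInt K e1 e2))
      with (- (s ^ 2 * RInt K e1 e2)) by ring.
    rewrite Rabs_Ropp, Rabs_mult.
    assert (Hint : Rabs (RInt K e1 e2) <= (e2 - e1) * (exp (-(s*e1)) * B)).
    { apply abs_RInt_le_const; auto. apply ex_RInt_kernel; auto.
      intros t Ht. unfold K. rewrite Rabs_mult. rewrite Rabs_pos_eq by (left; apply exp_pos).
      apply Rmult_le_compat. left; apply exp_pos. apply Rabs_pos.
      destruct (Req_dec t e1) as [->|Hne]. lra. left. apply exp_increasing.
      assert (s * e1 < s * t) by (apply Rmult_lt_compat_l; lra). lra.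
      apply HBb; auto. }
    rewrite (Rabs_pos_eq (s^2)) by apply pow2_ge_0.
    assert (Hexp : (s * e1) ^ 3 / 27 <= exp (s * e1)) by (apply exp_cube; nra).
    assert (Hep : 0 < exp (s * e1)) by apply exp_pos.
    assert (He13 : 0 < e1 ^ 3) by (apply pow_lt; lra).
    assert (s ^ 2 * ((e2 - e1) * (/ exp (s * e1) * B)) <= C / (e1 ^ 3 * s)).
    { unfold C. 
      apply Rle_trans with (s ^ 2 * ((e2 - e1) * (27 / (s * e1) ^ 3 * B))).
      - apply Rmult_le_compat_l. apply pow2_ge_0. apply Rmult_le_compat_l. lra.
        apply Rmult_le_compat_r; auto.
        replace (27 / (s * e1) ^ 3) with (/ ((s * e1) ^ 3 / 27)) by (field; split; lra).
        apply Rinv_le_contravar. apply Rdiv_lt_0_compat. apply pow_lt; nra. lra. auto.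
      - right. field. split; lra. }
    assert (C / (e1 ^ 3 * s) < eta).
    { apply Rmult_lt_reg_r with (e1 ^ 3 * s). nra.
      unfold Rdiv. rewrite Rmult_assoc, Rinv_l by nra. rewrite Rmult_1_r.
      assert (C / (e1 ^ 3 * eta) * (e1^3 * eta) = C) by (field; split; lra).
      assert (C < (C / (e1 ^ 3 * eta) + 1) * (e1 ^ 3 * eta)) by nra.
      assert ((C / (e1 ^ 3 * eta) + 1) * (e1 ^ 3 * eta) <= s * (e1 ^ 3 * eta)).
      { apply Rmult_le_compat_r. nra. auto. }
      nra. }
    assert (Rabs (RInt K e1 e2) * s^2 <=
            (e2 - e1) * (exp (- (s * e1)) * B) * s ^ 2).
    { apply Rmult_le_compat_r. apply pow2_ge_0. auto. }
    rewrite exp_Ropp in *. nra. }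
  intros H1 H2 eta Heta. destruct (Rle_dec d1 d2).
  - apply Main; auto.
  - destruct (Main d2 d1 H2 ltac:(lra) eta Heta) as [M HM]. exists M.
    intros s Hs. rewrite Rabs_minus_sym. auto.
Qed.

Definition ev_ge (h : R -> R) c := forall eta, 0 < eta -> exists M, forall s, M <= s -> c - eta < h s.
Definition ev_le (h : R -> R) c := forall eta, 0 < eta -> exists M, forall s, M <= s -> h s < c + eta.

Lemma Rbar_le_approx_lo c (l : Rbar) : (forall eta, 0 < eta -> Rbar_le (Finite (c - eta)) l) -> Rbar_le (Finite c) l.
Proof.
  intros H. destruct l as [l| |]; simpl in *; auto.
  - apply NNPP; intro Hn. specialize (H ((c - l)/2) ltac:(lra)). lra.
  - apply (H 1); lra.
Qed.

Lemma Rbar_le_approx_hi c (l : Rbar) : (forall eta, 0 < eta -> Rbar_le l (Finite (c + eta))) -> Rbar_le l (Finite c).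
Proof.
  intros H. destruct l as [l| |]; simpl in *; auto.
  - apply NNPP; intro Hn. specialize (H ((l - c)/2) ltac:(lra)). lra.
  - apply (H 1); lra.
Qed.

Lemma liminf_ev h c : Rbar_le (Finite c) (liminf_pinfty h) <-> ev_ge h c.
Proof.
  unfold liminf_pinfty, Rbar_lub. destruct (Rbar_ex_lub _) as [l [Hub Hlub]]; simpl.
  split.
  - intros Hc eta Heta. apply NNPP; intro Hn.
    assert (Rbar_le l (Finite (c - eta))).
    { apply Hlub. intros y [M ->].
      destruct (Glb_Rbar_correct (fun z => exists s, M <= s /\ z = h s)) as [Hlb _].
      apply not_ex_all_not with (n := M) in Hn.
      apply not_all_ex_not in Hn. destruct Hn as [s Hs].
      apply imply_to_and in Hs. destruct Hs as [Hs1 Hs2].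
      eapply Rbar_le_trans. apply Hlb. exists s; split; eauto. simpl. lra. }
    destruct l as [l| |]; simpl in *; lra.
  - intros Hev. apply Rbar_le_approx_lo. intros eta Heta.
    destruct (Hev eta Heta) as [M HM].
    eapply Rbar_le_trans. 2: { apply Hub. exists M. reflexivity. }
    destruct (Glb_Rbar_correct (fun z => exists s, M <= s /\ z = h s)) as [_ Hg].
    apply Hg. intros z [s [Hs ->]]. simpl. left. apply HM; auto.
Qed.

Lemma limsup_ev h c : Rbar_le (limsup_pinfty h) (Finite c) <-> ev_le h c.
Proof.
  unfold limsup_pinfty, Rbar_glb. destruct (Rbar_ex_glb _) as [l [Hlb Hglb]]; simpl.
  split.
  - intros Hc eta Heta. apply NNPP; intro Hn.
    assert (Rbar_le (Finite (c + eta)) l).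
    { apply Hglb. intros y [M ->].
      destruct (Lub_Rbar_correct (fun z => exists s, M <= s /\ z = h s)) as [Hub _].
      apply not_ex_all_not with (n := M) in Hn.
      apply not_all_ex_not in Hn. destruct Hn as [s Hs].
      apply imply_to_and in Hs. destruct Hs as [Hs1 Hs2].
      eapply Rbar_le_trans. 2: apply Hub. 2: exists s; split; eauto. simpl. lra. }
    destruct l as [l| |]; simpl in *; lra.
  - intros Hev. apply Rbar_le_approx_hi. intros eta Heta.
    destruct (Hev eta Heta) as [M HM].
    eapply Rbar_le_trans. apply Hlb. exists M. reflexivity.
    destruct (Lub_Rbar_correct (fun z => exists s, M <= s /\ z = h s)) as [_ Hg].
    apply Hg. intros z [s [Hs ->]]. simpl. left. apply HM; auto.
Qed.

Lemma Rbar_min_ge c A B : Rbar_le (Finite c) (Rbar_min A B) <-> Rbar_le (Finite c) A /\ Rbar_le (Finite c) B.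
Proof.
  destruct A as [A| |]; destruct B as [B| |]; simpl; try tauto.
  unfold Rmin; destruct Rle_dec; split; intros; try lra; tauto.
Qed.

Lemma Rbar_maxi_le c A B : Rbar_le (Rbar_maxi A B) (Finite c) <-> Rbar_le A (Finite c) /\ Rbar_le B (Finite c).
Proof.
  unfold Rbar_maxi.
  destruct A as [A| |]; destruct B as [B| |]; simpl; try tauto.
  unfold Rmin; destruct Rle_dec; split; intros; try lra; try tauto.
  all: rewrite Ropp_involutive; tauto.
Qed.

Lemma lower_ge a b U x d c : a < b -> a <= x <= b ->
  Rbar_le (Finite c) (LD1_lower a b U x d) <->
  ((x < b -> ev_ge (lap_right U x d) c) /\ (a < x -> ev_ge (lap_left U x d) c)).
Proof.
  intros Hab Hx. unfold LD1_lower.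
  destruct (Rlt_dec x b); destruct (Rlt_dec a x).
  - rewrite Rbar_min_ge, !liminf_ev. tauto.
  - rewrite liminf_ev. split; [intros H; split; [auto|lra]|tauto].
  - rewrite liminf_ev. split; [intros H; split; [lra|auto]|intros [_ H]; apply H; lra].
  - lra.
Qed.

Lemma upper_le a b U x d c : a < b -> a <= x <= b ->
  Rbar_le (LD1_upper a b U x d) (Finite c) <->
  ((x < b -> ev_le (lap_right U x d) c) /\ (a < x -> ev_le (lap_left U x d) c)).
Proof.
  intros Hab Hx. unfold LD1_upper.
  destruct (Rlt_dec x b); destruct (Rlt_dec a x).
  - rewrite Rbar_maxi_le, !limsup_ev. tauto.
  - rewrite limsup_ev. split; [intros H; split; [auto|lra]|tauto].
  - rewrite limsup_ev. split; [intros H; split; [lra|auto]|intros [_ H]; apply H; lra].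
  - lra.
Qed.

Lemma lower_ge_minf a b U x d c : Rbar_le (Finite c) (LD1_lower a b U x d) -> Rbar_lt m_infty (LD1_lower a b U x d).
Proof. destruct (LD1_lower a b U x d); simpl; auto. Qed.

Lemma upper_le_pinf a b U x d c : Rbar_le (LD1_upper a b U x d) (Finite c) -> Rbar_lt (LD1_upper a b U x d) p_infty.
Proof. destruct (LD1_upper a b U x d); simpl; auto. Qed.

Lemma ev_ge_transfer h1 h2 c : ev_ge h1 c ->
  (forall eta, 0 < eta -> exists M, forall s, M <= s -> Rabs (h1 s - h2 s) < eta) -> ev_ge h2 c.
Proof.
  intros H1 H12 eta Heta. destruct (H1 (eta/2) ltac:(lra)) as [M1 HM1].
  destruct (H12 (eta/2) ltac:(lra)) as [M2 HM2]. exists (Rmax M1 M2). intros s Hs.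
  specialize (HM1 s (Rle_trans _ _ _ (Rmax_l _ _) Hs)). specialize (HM2 s (Rle_trans _ _ _ (Rmax_r _ _) Hs)).
  unfold Rabs in HM2; destruct Rcase_abs in HM2; lra.
Qed.

Lemma ev_le_transfer h1 h2 c : ev_le h1 c ->
  (forall eta, 0 < eta -> exists M, forall s, M <= s -> Rabs (h1 s - h2 s) < eta) -> ev_le h2 c.
Proof.
  intros H1 H12 eta Heta. destruct (H1 (eta/2) ltac:(lra)) as [M1 HM1].
  destruct (H12 (eta/2) ltac:(lra)) as [M2 HM2]. exists (Rmax M1 M2). intros s Hs.
  specialize (HM1 s (Rle_trans _ _ _ (Rmax_l _ _) Hs)). specialize (HM2 s (Rle_trans _ _ _ (Rmax_r _ _) Hs)).
  unfold Rabs in HM2; destruct Rcase_abs in HM2; lra.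
Qed.

Lemma ev_ge_ext h1 h2 c : ev_ge h1 c -> (exists M, forall s, M <= s -> h1 s = h2 s) -> ev_ge h2 c.
Proof.
  intros H [M0 HM0] eta Heta. destruct (H eta Heta) as [M HM]. exists (Rmax M M0).
  intros s Hs. rewrite <- HM0 by (eapply Rle_trans; [apply Rmax_r|apply Hs]).
  apply HM. eapply Rle_trans; [apply Rmax_l|apply Hs].
Qed.

Lemma ev_le_ext h1 h2 c : ev_le h1 c -> (exists M, forall s, M <= s -> h1 s = h2 s) -> ev_le h2 c.
Proof.
  intros H [M0 HM0] eta Heta. destruct (H eta Heta) as [M HM]. exists (Rmax M M0).
  intros s Hs. rewrite <- HM0 by (eapply Rle_trans; [apply Rmax_r|apply Hs]).
  apply HM. eapply Rle_trans; [apply Rmax_l|apply Hs].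
Qed.

Definition Cl (a b : R) (U : R -> R) := fun y => U (clamp a b y).
Definition Cr (a b : R) (U : R -> R) := fun y => - U (clamp a b (- y)).

Lemma gcont_Cl a b U : a <= b -> continuous_on_interval a b U -> gcont (Cl a b U).
Proof. intros; apply gcont_clamp; auto. Qed.
Lemma gcont_Cr a b U : a <= b -> continuous_on_interval a b U -> gcont (Cr a b U).
Proof. intros; unfold Cr; apply (gcont_refl (fun y => U (clamp a b y))), gcont_clamp; auto. Qed.

Lemma LR_delta_abs (G : R -> R) x d1 d2 : gcont G -> 0 < d1 -> 0 < d2 ->
  forall eta, 0 < eta -> exists M, forall s, M <= s -> Rabs (LR G x d1 s - LR G x d2 s) < eta.
Proof. apply LR_delta. Qed.

Lemma major_right_LR a b f U x d : a < b -> major_function a b f U -> a <= x < b -> 0 < d -> x + d <= b ->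
  ev_ge (LR (Cl a b U) x d) (f x).
Proof.
  intros Hab [HU HM] Hx Hd Hxd.
  destruct (HM x ltac:(lra)) as [dl [[Hdl [Hr _]] [Hle _]]].
  destruct (Hr (proj2 Hx)) as [Hxdl _].
  apply lower_ge in Hle; auto; [|lra]. destruct Hle as [Hle _]. specialize (Hle (proj2 Hx)).
  assert (H1 : ev_ge (LR (Cl a b U) x dl) (f x)).
  { eapply ev_ge_ext. apply Hle. exists 0. intros s _. apply lap_right_LR; auto; lra. }
  eapply ev_ge_transfer. apply H1. apply LR_delta; auto. apply gcont_Cl; auto; lra.
Qed.

Lemma major_left_LR a b f U x d : a < b -> major_function a b f U -> a < x <= b -> 0 < d -> a <= x - d ->
  ev_ge (LR (Cr a b U) (- x) d) (f x).
Proof.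
  intros Hab [HU HM] Hx Hd Hxd.
  destruct (HM x ltac:(lra)) as [dl [[Hdl [_ Hl]] [Hle _]]].
  destruct (Hl (proj1 Hx)) as [Hxdl _].
  apply lower_ge in Hle; auto; [|lra]. destruct Hle as [_ Hle]. specialize (Hle (proj1 Hx)).
  assert (H1 : ev_ge (LR (Cr a b U) (- x) dl) (f x)).
  { eapply ev_ge_ext. apply Hle. exists 0. intros s _. apply lap_left_LR; auto; lra. }
  eapply ev_ge_transfer. apply H1. apply LR_delta; auto. apply gcont_Cr; auto; lra.
Qed.

Lemma minor_right_LR a b f V x d : a < b -> minor_function a b f V -> a <= x < b -> 0 < d -> x + d <= b ->
  ev_le (LR (Cl a b V) x d) (f x).
Proof.
  intros Hab [HU HM] Hx Hd Hxd.
  destruct (HM x ltac:(lra)) as [dl [[Hdl [Hr _]] [Hle _]]].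
  destruct (Hr (proj2 Hx)) as [Hxdl _].
  apply upper_le in Hle; auto; [|lra]. destruct Hle as [Hle _]. specialize (Hle (proj2 Hx)).
  assert (H1 : ev_le (LR (Cl a b V) x dl) (f x)).
  { eapply ev_le_ext. apply Hle. exists 0. intros s _. apply lap_right_LR; auto; lra. }
  eapply ev_le_transfer. apply H1. apply LR_delta; auto. apply gcont_Cl; auto; lra.
Qed.

Lemma minor_left_LR a b f V x d : a < b -> minor_function a b f V -> a < x <= b -> 0 < d -> a <= x - d ->
  ev_le (LR (Cr a b V) (- x) d) (f x).
Proof.
  intros Hab [HU HM] Hx Hd Hxd.
  destruct (HM x ltac:(lra)) as [dl [[Hdl [_ Hl]] [Hle _]]].
  destruct (Hl (proj1 Hx)) as [Hxdl _].
  apply upper_le in Hle; auto; [|lra]. destruct Hle as [_ Hle]. specialize (Hle (proj1 Hx)).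
  assert (H1 : ev_le (LR (Cr a b V) (- x) dl) (f x)).
  { eapply ev_le_ext. apply Hle. exists 0. intros s _. apply lap_left_LR; auto; lra. }
  eapply ev_le_transfer. apply H1. apply LR_delta; auto. apply gcont_Cr; auto; lra.
Qed.

Lemma cont_restrict a b y U : a <= y <= b -> continuous_on_interval a b U -> continuous_on_interval a y U.
Proof.
  intros Hy HU x Hx eps Heps. destruct (HU x ltac:(lra) eps Heps) as [d [Hd Hd2]].
  exists d; split; auto. intros z Hz Hz2. apply Hd2; auto; lra.
Qed.

Lemma perron_near_restrict a b y U z : a < y <= b -> continuous_on_interval a b U -> a <= z <= y ->
  forall d, 0 < d -> (a < z -> a <= z - d) ->
  perron_near a y U z (if Rlt_dec z y then Rmin d (y - z) else d).
Proof.
  intros Hy HU Hz d Hd Hl.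
  assert (HG := gcont_Cl a b U ltac:(lra) HU).
  destruct (Rlt_dec z y) as [Hzy|Hzy].
  - assert (0 < Rmin d (y - z)) by (apply Rmin_glb_lt; lra).
    assert (Rmin d (y - z) <= d) by apply Rmin_l.
    assert (Rmin d (y - z) <= y - z) by apply Rmin_r.
    split; auto. split.
    + intros _. split. lra. apply (perron_integrable_cont _ (Cl a b U)); auto. lra.
      intros u Hu. unfold Cl. rewrite clamp_id; auto; lra.
    + intros Haz. specialize (Hl Haz). split. lra.
      apply (perron_integrable_cont _ (Cl a b U)); auto. lra.
      intros u Hu. unfold Cl. rewrite clamp_id; auto; lra.
  - split; auto. split. intros; lra.
    intros Haz. specialize (Hl Haz). split. lra.
    apply (perron_integrable_cont _ (Cl a b U)); auto. lra.
    intros u Hu. unfold Cl. rewrite clamp_id; auto; lra.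
Qed.

Lemma major_restrict a b y f U : a < y <= b -> major_function a b f U -> major_function a y f U.
Proof.
  intros Hy HMaj. pose proof HMaj as [HU HM]. split. apply (cont_restrict a b); auto; lra.
  intros z Hz.
  set (d := if Rlt_dec a z then z - a else 1).
  assert (Hd : 0 < d) by (unfold d; destruct Rlt_dec; lra).
  assert (Hdl : a < z -> a <= z - d) by (unfold d; destruct Rlt_dec; lra).
  set (d' := if Rlt_dec z y then Rmin d (y - z) else d).
  exists d'. split. apply (perron_near_restrict a b); auto.
  assert (Hd' : 0 < d' /\ d' <= d /\ (z < y -> z + d' <= y)).
  { unfold d'; destruct (Rlt_dec z y). split. apply Rmin_glb_lt; lra. split. apply Rmin_l.
    intros; pose proof (Rmin_r d (y - z)); lra. lra. }
  destruct Hd' as [Hd'1 [Hd'2 Hd'3]].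
  assert (Hlow : Rbar_le (Finite (f z)) (LD1_lower a y U z d')).
  { apply lower_ge; [lra|lra|]. split.
    - intros Hzy. specialize (Hd'3 Hzy). eapply ev_ge_ext. apply (major_right_LR a b f U z d'); auto; lra.
      exists 0; intros s _. symmetry. apply lap_right_LR; auto; lra.
    - intros Haz. specialize (Hdl Haz). eapply ev_ge_ext. apply (major_left_LR a b f U z d'); auto; try lra.
      exists 0; intros s _. symmetry. apply lap_left_LR; auto; lra. }
  split; auto. eapply lower_ge_minf; eauto.
Qed.

Lemma minor_restrict a b y f V : a < y <= b -> minor_function a b f V -> minor_function a y f V.
Proof.
  intros Hy HMin. pose proof HMin as [HU HM]. split. apply (cont_restrict a b); auto; lra.
  intros z Hz.
  set (d := if Rlt_dec a z then z - a else 1).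
  assert (Hd : 0 < d) by (unfold d; destruct Rlt_dec; lra).
  assert (Hdl : a < z -> a <= z - d) by (unfold d; destruct Rlt_dec; lra).
  set (d' := if Rlt_dec z y then Rmin d (y - z) else d).
  exists d'. split. apply (perron_near_restrict a b); auto.
  assert (Hd' : 0 < d' /\ d' <= d /\ (z < y -> z + d' <= y)).
  { unfold d'; destruct (Rlt_dec z y). split. apply Rmin_glb_lt; lra. split. apply Rmin_l.
    intros; pose proof (Rmin_r d (y - z)); lra. lra. }
  destruct Hd' as [Hd'1 [Hd'2 Hd'3]].
  assert (Hup : Rbar_le (LD1_upper a y V z d') (Finite (f z))).
  { apply upper_le; [lra|lra|]. split.
    - intros Hzy. specialize (Hd'3 Hzy). eapply ev_le_ext. apply (minor_right_LR a b f V z d'); auto; lra.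
      exists 0; intros s _. symmetry. apply lap_right_LR; auto; lra.
    - intros Haz. specialize (Hdl Haz). eapply ev_le_ext. apply (minor_left_LR a b f V z d'); auto; try lra.
      exists 0; intros s _. symmetry. apply lap_left_LR; auto; lra. }
  split; auto. eapply upper_le_pinf; eauto.
Qed.

Lemma gcont_cpt (G : R -> R) : gcont G -> forall z, continuity_pt G z.
Proof. intros HG z. apply continuity_pt_filterlim, HG. Qed.

Lemma argmax (G : R -> R) u v : gcont G -> u <= v ->
  exists m, u <= m <= v /\ forall t, u <= t <= v -> G t <= G m.
Proof.
  intros HG Huv. destruct (continuity_ab_maj G u v Huv) as [m [H1 H2]].
  intros; apply gcont_cpt; auto. exists m; auto.
Qed.

Lemma mono_UV c d f U V : c < d -> major_function c d f U -> minor_function c d f V ->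
  forall x y, c <= x -> x <= y -> y <= d -> V y - V x <= U y - U x.
Proof.
  intros Hcd HMaj HMin x y Hx Hxy Hy.
  destruct (Req_dec x y) as [->|Hne]. lra.
  apply Rnot_lt_le. intros H.
  pose proof HMaj as [HU _]. pose proof HMin as [HV _].
  set (Uc := Cl c d U). set (Vc := Cl c d V).
  assert (HUc : gcont Uc) by (apply gcont_Cl; auto; lra).
  assert (HVc : gcont Vc) by (apply gcont_Cl; auto; lra).
  set (D := (V y - V x) - (U y - U x)).
  set (e := D / (2 * (y - x))).
  assert (HD : 0 < D) by (unfold D; lra).
  assert (He : 0 < e) by (unfold e; apply Rdiv_lt_0_compat; lra).
  set (W := fun t => (Uc t - Vc t) + (0 + e * t)).
  assert (HW : gcont W) by (apply gcont_plus; [apply gcont_minus; auto | apply gcont_lin]).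
  assert (HUx : Uc x = U x) by (unfold Uc, Cl; rewrite clamp_id; auto; lra).
  assert (HUy : Uc y = U y) by (unfold Uc, Cl; rewrite clamp_id; auto; lra).
  assert (HVx : Vc x = V x) by (unfold Vc, Cl; rewrite clamp_id; auto; lra).
  assert (HVy : Vc y = V y) by (unfold Vc, Cl; rewrite clamp_id; auto; lra).
  assert (HWxy : W y < W x).
  { unfold W. rewrite HUx, HUy, HVx, HVy.
    assert (e * (y - x) = D / 2) by (unfold e; field; lra). 
    unfold D in *. lra. }
  destruct (argmax W x y HW ltac:(lra)) as [x0 [Hx0 Hmax]].
  assert (Hx0y : x0 < y). { destruct (Req_dec x0 y) as [->|]. specialize (Hmax x ltac:(lra)). lra. lra. }
  set (dl := y - x0). assert (Hdl : 0 < dl) by (unfold dl; lra).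
  assert (Hle : forall s, LR W x0 dl s <= 0).
  { intros s. apply LR_le0; auto. lra. intros t Ht. specialize (Hmax (x0 + t) ltac:(unfold dl in Ht; lra)). lra. }
  assert (Hdec : forall s, LR W x0 dl s = LR Uc x0 dl s - LR Vc x0 dl s + e * (s ^ 2 * J s dl)).
  { intros s. unfold W. rewrite LR_plus; [|apply gcont_minus; auto|apply gcont_lin].
    rewrite LR_minus; auto. rewrite LR_lin. ring. }
  destruct (major_right_LR c d f U x0 dl Hcd HMaj ltac:(lra) Hdl ltac:(unfold dl; lra) (e/8) ltac:(lra)) as [M1 HM1].
  destruct (minor_right_LR c d f V x0 dl Hcd HMin ltac:(lra) Hdl ltac:(unfold dl; lra) (e/8) ltac:(lra)) as [M2 HM2].
  destruct (sJ_large dl Hdl) as [M3 [HM3p HM3]].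
  set (s := Rmax M1 (Rmax M2 M3)).
  assert (Hs1 : M1 <= s) by apply Rmax_l.
  assert (Hs2 : M2 <= s) by (eapply Rle_trans; [apply Rmax_l|apply Rmax_r]).
  assert (Hs3 : M3 <= s) by (eapply Rle_trans; [apply Rmax_r|apply Rmax_r]).
  specialize (HM1 s Hs1). specialize (HM2 s Hs2). specialize (HM3 s Hs3).
  specialize (Hle s). rewrite Hdec in Hle.
  unfold Uc, Vc in *. nra.
Qed.

Lemma lub_glb_meet (A B : R -> Prop) : (exists r, A r) -> (exists r, B r) ->
  (forall r1 r2, A r1 -> B r2 -> r1 <= r2) ->
  (forall e, 0 < e -> exists r1 r2, A r1 /\ B r2 /\ r2 - r1 < e) ->
  exists L, Lub_Rbar A = Finite L /\ Glb_Rbar B = Finite L.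
Proof.
  intros [a0 Ha0] [b0 Hb0] Hle Hgap.
  destruct (Lub_Rbar_correct A) as [Hub Hlub].
  destruct (Glb_Rbar_correct B) as [Hlb Hglb].
  assert (H1 : Rbar_le (Lub_Rbar A) (Finite b0)).
  { apply Hlub. intros r Hr. simpl. apply Hle; auto. }
  assert (H2 : Rbar_le (Finite a0) (Lub_Rbar A)) by (apply Hub; auto).
  assert (H3 : Rbar_le (Glb_Rbar B) (Finite b0)) by (apply Hlb; auto).
  assert (H4 : Rbar_le (Finite a0) (Glb_Rbar B)).
  { apply Hglb. intros r Hr. simpl. apply Hle; auto. }
  destruct (Lub_Rbar A) as [L| |] eqn:EL; simpl in H1, H2; try contradiction.
  destruct (Glb_Rbar B) as [L'| |] eqn:EL'; simpl in H3, H4; try contradiction.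
  assert (HLL' : L <= L').
  { assert (H : Rbar_le (Finite L) (Finite L')).
    { apply Hglb. intros r Hr. apply Hlub. intros r' Hr'. simpl. apply Hle; auto. }
    simpl in H. auto. }
  assert (HL'L : L' <= L).
  { apply Rnot_lt_le; intro Hlt. destruct (Hgap (L' - L) ltac:(lra)) as [r1 [r2 [Hr1 [Hr2 Hr]]]].
    assert (H : Rbar_le (Finite r1) (Finite L)) by (apply Hub; auto).
    assert (H0 : Rbar_le (Finite L') (Finite r2)) by (apply Hlb; auto).
    simpl in *. lra. }
  exists L. split; auto. f_equal. lra.
Qed.

Lemma gap_pair a b f I : is_laplace a b f I ->
  forall e, 0 < e -> exists U V, major_function a b f U /\ minor_function a b f V /\
    (U b - U a) - (V b - V a) < e.
Proof.
  intros [H1 H2] e He.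
  assert (HV : exists V, minor_function a b f V /\ I - e/2 < V b - V a).
  { apply NNPP; intro Hn.
    destruct (Lub_Rbar_correct (fun y => exists V, minor_function a b f V /\ y = V b - V a)) as [_ Hlub].
    assert (Rbar_le (Lub_Rbar (fun y => exists V, minor_function a b f V /\ y = V b - V a)) (Finite (I - e/2))).
    { apply Hlub. intros r [V [HV ->]]. simpl. apply Rnot_lt_le; intro. apply Hn; eauto. }
    rewrite H1 in H. simpl in H. lra. }
  assert (HU : exists U, major_function a b f U /\ U b - U a < I + e/2).
  { apply NNPP; intro Hn.
    destruct (Glb_Rbar_correct (fun y => exists U, major_function a b f U /\ y = U b - U a)) as [_ Hglb].
    assert (Rbar_le (Finite (I + e/2)) (Glb_Rbar (fun y => exists U, major_function a b f U /\ y = U b - U a))).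
    { apply Hglb. intros r [U [HU ->]]. simpl. apply Rnot_lt_le; intro. apply Hn; eauto. }
    rewrite H2 in H. simpl in H. lra. }
  destruct HV as [V [HV HV2]]. destruct HU as [U [HU HU2]]. exists U, V. split; [auto|split; [auto|lra]].
Qed.

Lemma is_laplace_sub a b f I y : a < y <= b -> is_laplace a b f I ->
  exists L, is_laplace a y f L /\ laplace_int a y f = L /\
    forall U V, major_function a b f U -> minor_function a b f V ->
      V y - V a <= L <= U y - U a.
Proof.
  intros Hy HI.
  set (A := fun r => exists V, minor_function a y f V /\ r = V y - V a).
  set (B := fun r => exists U, major_function a y f U /\ r = U y - U a).
  destruct (gap_pair a b f I HI 1 ltac:(lra)) as [U0 [V0 [HU0 [HV0 _]]]].
  assert (Hab : a < b) by lra.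
  destruct (lub_glb_meet A B) as [L [HL1 HL2]].
  - exists (V0 y - V0 a). exists V0. split; auto. apply (minor_restrict a b); auto.
  - exists (U0 y - U0 a). exists U0. split; auto. apply (major_restrict a b); auto.
  - intros r1 r2 [V [HV ->]] [U [HU ->]]. pose proof (mono_UV a y f U V ltac:(lra) HU HV a y). lra.
  - intros e He. destruct (gap_pair a b f I HI e He) as [U [V [HU [HV Hg]]]].
    exists (V y - V a), (U y - U a). split. exists V; split; auto; apply (minor_restrict a b); auto.
    split. exists U; split; auto; apply (major_restrict a b); auto.
    pose proof (mono_UV a b f U V Hab HU HV y b ltac:(lra) ltac:(lra) ltac:(lra)). lra.
  - assert (HLap : is_laplace a y f L) by (split; auto).
    exists L. split; auto. split.
    + unfold laplace_int. assert (Hs := epsilon_spec (inhabits 0) (fun I => is_laplace a y f I) (ex_intro _ L HLap)).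
      destruct Hs as [Hs _]. fold A in Hs. rewrite HL1 in Hs. injection Hs; auto.
    + intros U V HU HV. split.
      * destruct (Lub_Rbar_correct A) as [Hub _]. 
        assert (Rbar_le (Finite (V y - V a)) (Lub_Rbar A)).
        { apply Hub. exists V. split; auto. apply (minor_restrict a b); auto. }
        rewrite HL1 in H. auto.
      * destruct (Glb_Rbar_correct B) as [Hlb _].
        assert (Rbar_le (Glb_Rbar B) (Finite (U y - U a))).
        { apply Hlb. exists U. split; auto. apply (major_restrict a b); auto. }
        rewrite HL2 in H. auto.
Qed.

Section Main.
Variables (a b I : R) (f F : R -> R).
Hypothesis Hab : a < b.
Hypothesis HI : is_laplace a b f I.
Hypothesis HFa : F a = 0.
Hypothesis HF : forall x, a < x <= b -> F x = laplace_int a x f.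

Lemma F_sandwich y U V : a <= y <= b -> major_function a b f U -> minor_function a b f V ->
  V y - V a <= F y <= U y - U a.
Proof.
  intros Hy HU HV. destruct (Req_dec y a) as [->|Hne]. rewrite HFa. lra.
  destruct (is_laplace_sub a b f I y ltac:(lra) HI) as [L [_ [HL HLs]]].
  rewrite HF by lra. rewrite HL. apply HLs; auto.
Qed.

Lemma F_incr x y U V : a <= x -> x <= y -> y <= b -> major_function a b f U -> minor_function a b f V ->
  V y - V x <= F y - F x <= U y - U x.
Proof.
  intros Hx Hxy Hy HU HV.
  assert (Main : forall e, 0 < e -> V y - V x - 2 * e <= F y - F x <= U y - U x + 2 * e).
  { intros e He. destruct (gap_pair a b f I HI e He) as [U' [V' [HU' [HV' Hg]]]].
    pose proof (F_sandwich y U' V' ltac:(lra) HU' HV').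
    pose proof (F_sandwich x U' V' ltac:(lra) HU' HV').
    pose proof (mono_UV a b f U' V' Hab HU' HV' a x ltac:(lra) ltac:(lra) ltac:(lra)).
    pose proof (mono_UV a b f U' V' Hab HU' HV' x y ltac:(lra) ltac:(lra) ltac:(lra)).
    pose proof (mono_UV a b f U' V' Hab HU' HV' y b ltac:(lra) ltac:(lra) ltac:(lra)).
    pose proof (mono_UV a b f U V' Hab HU HV' x y ltac:(lra) ltac:(lra) ltac:(lra)).
    pose proof (mono_UV a b f U' V Hab HU' HV x y ltac:(lra) ltac:(lra) ltac:(lra)).
    lra. }
  split; apply Rnot_lt_le; intro Hlt.
  - destruct (Main ((V y - V x - (F y - F x)) / 4) ltac:(lra)). lra.
  - destruct (Main ((F y - F x - (U y - U x)) / 4) ltac:(lra)). lra.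
Qed.

End Main.

Fixpoint fsum (w : nat -> R) (N : nat) : R :=
  match N with O => 0 | S m => fsum w m + w m end.

Lemma fsum_ext w1 w2 N : (forall n, (n < N)%nat -> w1 n = w2 n) -> fsum w1 N = fsum w2 N.
Proof. induction N; intros H; simpl; auto. rewrite IHN by (intros; apply H; lia). rewrite H by lia; auto. Qed.

Lemma fsum_le w1 w2 N : (forall n, (n < N)%nat -> w1 n <= w2 n) -> fsum w1 N <= fsum w2 N.
Proof. induction N; intros H; simpl. lra. pose proof (IHN ltac:(intros; apply H; lia)). pose proof (H N ltac:(lia)). lra. Qed.

Lemma fsum_plus w1 w2 N : fsum (fun n => w1 n + w2 n) N = fsum w1 N + fsum w2 N.
Proof. induction N; simpl; [lra|rewrite IHN; ring]. Qed.

Lemma fsum_scal c w N : fsum (fun n => c * w n) N = c * fsum w N.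
Proof. induction N; simpl; [ring|rewrite IHN; ring]. Qed.

Lemma fsum_nonneg w N : (forall n, 0 <= w n) -> 0 <= fsum w N.
Proof. induction N; intros H; simpl. lra. pose proof (H N). pose proof (IHN H). lra. Qed.

Lemma lensum_fsum lo hi N : lensum lo hi N = fsum (fun n => hi n - lo n) N.
Proof. induction N; simpl; auto. rewrite IHN; auto. Qed.

Lemma fsum_geom e N : fsum (fun n => e / 2 ^ (S n)) N = e - e / 2 ^ N.
Proof.
  induction N. simpl. field. change (fsum (fun n => e / 2 ^ (S n)) (S N)) with (fsum (fun n => e / 2 ^ (S n)) N + e / 2 ^ (S N)).
  rewrite IHN. simpl. field. apply pow_nonzero. lra.
Qed.

Lemma fsum_geom_le e N : 0 <= e -> fsum (fun n => e / 2 ^ (S n)) N <= e.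
Proof.
  intros He. rewrite fsum_geom. assert (0 < 2 ^ N) by (apply pow_lt; lra).
  assert (0 <= e / 2 ^ N) by (apply Rdiv_le_0_compat; lra). lra.
Qed.

Lemma least_nat (P : nat -> Prop) : (exists n, P n) -> exists n, P n /\ forall m, (m < n)%nat -> ~ P m.
Proof.
  intros [n Hn]. revert Hn. induction n as [n IH] using (well_founded_induction Wf_nat.lt_wf). intros Hn.
  destruct (classic (exists m, (m < n)%nat /\ P m)) as [[m [Hm HPm]]|Hno].
  - apply (IH m Hm HPm).
  - exists n. split; auto. intros m Hm HPm. apply Hno; eauto.
Qed.

Definition indR (P : Prop) (r : R) : R := if excluded_middle_informative P then r else 0.

Lemma disjoint_sum (H : R -> R) (al be : nat -> R) (ch : nat -> Prop) :
  (forall n, ch n -> al n < be n) ->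
  (forall n m, n <> m -> ch n -> ch m -> be n <= al m \/ be m <= al n) ->
  forall N (ch' : nat -> Prop) a' b', a' <= b' ->
  (forall u v, a' <= u <= v -> v <= b' -> H u <= H v) ->
  (forall n, (n < N)%nat -> ch' n -> ch n /\ a' <= al n /\ be n <= b') ->
  fsum (fun n => indR (ch' n) (H (be n) - H (al n))) N <= H b' - H a'.
Proof.
  intros Hlt Hdis N. induction N; intros ch' a' b' Hab Hmono Hin; simpl.
  - assert (H a' <= H b') by (apply Hmono; lra). lra.
  - unfold indR at 2. destruct (excluded_middle_informative (ch' N)) as [HN|HN].
    + destruct (Hin N ltac:(lia) HN) as [HchN [HaN HbN]].
      pose proof (Hlt N HchN).
      set (chL := fun n => ch' n /\ be n <= al N).
      set (chR := fun n => ch' n /\ be N <= al n).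
      assert (Hsplit : fsum (fun n => indR (ch' n) (H (be n) - H (al n))) N =
              fsum (fun n => indR (chL n) (H (be n) - H (al n))) N +
              fsum (fun n => indR (chR n) (H (be n) - H (al n))) N).
      { rewrite <- fsum_plus. apply fsum_ext. intros n Hn. unfold indR, chL, chR.
        destruct (excluded_middle_informative (ch' n)) as [Hc|Hc];
        destruct (excluded_middle_informative (ch' n /\ be n <= al N)) as [HL|HL];
        destruct (excluded_middle_informative (ch' n /\ be N <= al n)) as [HR|HR]; try tauto.
        - destruct (Hin n ltac:(lia) Hc) as [Hcn _]. pose proof (Hlt n Hcn). lra.
        - ring.
        - ring.
        - destruct (Hin n ltac:(lia) Hc) as [Hcn _].
          destruct (Hdis n N ltac:(lia) Hcn HchN); tauto.
        - ring. }
      rewrite Hsplit.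
      assert (IL : fsum (fun n => indR (chL n) (H (be n) - H (al n))) N <= H (al N) - H a').
      { apply IHN. lra. intros u v Hu Hv; apply Hmono; lra.
        intros n Hn [Hc Hb]. destruct (Hin n ltac:(lia) Hc) as [A [B C]]. repeat split; auto. }
      assert (IR : fsum (fun n => indR (chR n) (H (be n) - H (al n))) N <= H b' - H (be N)).
      { apply IHN. lra. intros u v Hu Hv; apply Hmono; lra.
        intros n Hn [Hc Hb]. destruct (Hin n ltac:(lia) Hc) as [A [B C]]. repeat split; auto. }
      lra.
    + rewrite Rplus_0_r. apply IHN; auto.
Qed.

Lemma gcont_eps (G : R -> R) : gcont G -> forall t e, 0 < e -> exists r, 0 < r /\ forall u, Rabs (u - t) < r -> Rabs (G u - G t) < e.
Proof.
  intros HG t e He. pose proof (proj2 (continuity_pt_filterlim G t) (HG t)) as Hu.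
  destruct (Hu e He) as [r [Hr Hr2]]. exists r; split; auto.
  intros v Hv. destruct (Req_dec v t) as [->|Hne].
  { rewrite Rminus_eq_0, Rabs_R0; lra. }
  apply (Hr2 v). split; [unfold D_x, no_cond; split; auto|]. simpl; unfold R_dist; auto.
Qed.

Section RisingSun.
Variables (a b eta : R) (H : R -> R).
Hypothesis Hab : a < b.
Hypothesis Heta : 0 < eta.
Hypothesis HG : gcont H.
Hypothesis Hmono : forall u v, a <= u <= v -> v <= b -> H u <= H v.

Definition g t := H t - eta * t.
Definition Kset t := a <= t <= b /\ forall y, t < y <= b -> g y <= g t.
Definition Eset x := a <= x < b /\ exists y, x < y <= b /\ H y - H x > eta * (y - x).

Lemma g_cont : gcont g.
Proof. unfold g. apply gcont_minus; auto. intros z. pose proof (gcont_lin 0 eta z).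
  eapply continuous_ext; [|apply H0]. intros; simpl; ring. Qed.

Lemma E_notK x : Eset x -> ~ Kset x.
Proof. intros [Hx [y [Hy Hy2]]] [_ HK]. specialize (HK y Hy). unfold g in HK. lra. Qed.

Lemma notK_E t : a <= t <= b -> ~ Kset t -> Eset t.
Proof.
  intros Ht HnK. assert (~ forall y, t < y <= b -> g y <= g t) by (intro; apply HnK; split; auto).
  apply not_all_ex_not in H0. destruct H0 as [y Hy]. apply imply_to_and in Hy. destruct Hy as [Hy1 Hy2].
  split. lra. exists y. split; auto. unfold g in Hy2. lra.
Qed.

Lemma K_b : Kset b.
Proof. split. lra. intros; lra. Qed.

Lemma beta_ex x : Eset x -> exists be, Kset be /\ x < be /\ forall t, x <= t < be -> ~ Kset t.
Proof.
  intros HE. pose proof HE as [[Hx1 Hx2] _].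
  set (S := fun t => exists t', t = - t' /\ Kset t' /\ x <= t').
  assert (Hb : bound S). { exists (- x). intros z [t' [-> [_ Ht]]]. lra. }
  destruct (completeness S Hb (ex_intro _ (- b) (ex_intro _ b (conj eq_refl (conj K_b (Rlt_le _ _ Hx2)))))) as [m [Hub Hlub]].
  set (b0 := - m).
  assert (Hlow : forall t, Kset t -> x <= t -> b0 <= t).
  { intros t Ht Hxt. assert (- t <= m) by (apply Hub; exists t; auto). unfold b0; lra. }
  assert (Hgr : forall b', (forall t, Kset t -> x <= t -> b' <= t) -> b' <= b0).
  { intros b' Hb'. assert (m <= - b'); [|unfold b0; lra]. apply Hlub. intros z [t' [-> [Ht1 Ht2]]].
    specialize (Hb' t' Ht1 Ht2). lra. }
  assert (Hxb0 : x <= b0) by (apply Hgr; auto).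
  assert (Hb0b : b0 <= b) by (apply Hlow; [apply K_b|lra]).
  assert (HK0 : Kset b0).
  { split. lra. intros y Hy. apply Rnot_lt_le; intro Hgy.
    destruct (gcont_eps g g_cont b0 (g y - g b0) ltac:(lra)) as [r [Hr Hr2]].
    assert (Hex : exists t, Kset t /\ x <= t /\ t < Rmin y (b0 + r)).
    { apply NNPP; intro Hn. assert (Rmin y (b0 + r) <= b0).
      { apply Hgr. intros t Ht Hxt. apply Rnot_lt_le; intro. apply Hn. exists t; auto. }
      unfold Rmin in H0; destruct Rle_dec; lra. }
    destruct Hex as [t [Ht [Hxt Htl]]].
    assert (b0 <= t) by (apply Hlow; auto).
    assert (t < y) by (eapply Rlt_le_trans; [apply Htl|apply Rmin_l]).
    assert (t < b0 + r) by (eapply Rlt_le_trans; [apply Htl|apply Rmin_r]).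
    destruct Ht as [_ Ht]. specialize (Ht y ltac:(lra)).
    specialize (Hr2 t ltac:(rewrite Rabs_right; lra)).
    unfold Rabs in Hr2; destruct Rcase_abs in Hr2; lra. }
  exists b0. split; auto. split.
  - destruct (Req_dec x b0) as [<-|]; [exfalso; apply (E_notK x); auto|lra].
  - intros t Ht HKt. assert (b0 <= t) by (apply Hlow; auto; lra). lra.
Qed.

Lemma alpha_ex x : Eset x -> exists al, a <= al <= x /\ (Kset al \/ al = a) /\ forall t, al < t <= x -> ~ Kset t.
Proof.
  intros HE. pose proof HE as [[Hx1 Hx2] _].
  destruct (classic (exists t, Kset t /\ t <= x)) as [[t0 [Ht0 Ht0x]]|Hno].
  - set (S := fun t => Kset t /\ t <= x).
    assert (Hb : bound S). { exists x. intros z [_ Hz]. auto. }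
    destruct (completeness S Hb (ex_intro _ t0 (conj Ht0 Ht0x))) as [m [Hub Hlub]].
    assert (Hmx : m <= x) by (apply Hlub; intros z [_ Hz]; auto).
    assert (Htm : t0 <= m) by (apply Hub; split; auto).
    assert (Hat0 : a <= t0) by (destruct Ht0 as [[? ?] _]; auto).
    assert (HKm : Kset m).
    { split. lra. intros y Hy. apply Rnot_lt_le; intro Hgy.
      destruct (gcont_eps g g_cont m (g y - g m) ltac:(lra)) as [r [Hr Hr2]].
      assert (Hex : exists t, S t /\ m - r < t).
      { apply NNPP; intro Hn. assert (m <= m - r); [|lra]. apply Hlub. intros t Ht.
        apply Rnot_lt_le; intro. apply Hn; eauto. }
      destruct Hex as [t [[Ht Htx] Htm']].
      assert (t <= m) by (apply Hub; split; auto).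
      destruct Ht as [[Ht1 Ht2] Ht]. specialize (Ht y ltac:(lra)).
      specialize (Hr2 t ltac:(rewrite Rabs_left1; lra)).
      unfold Rabs in Hr2; destruct Rcase_abs in Hr2; lra. }
    exists m. split. lra. split. auto.
    intros t Ht HKt. assert (t <= m) by (apply Hub; split; auto; lra). lra.
  - exists a. split. lra. split. auto. intros t Ht HKt. apply Hno. exists t; split; auto; lra.
Qed.

Definition beta x := epsilon (inhabits 0) (fun be => Kset be /\ x < be /\ forall t, x <= t < be -> ~ Kset t).
Definition alpha x := epsilon (inhabits 0) (fun al => a <= al <= x /\ (Kset al \/ al = a) /\ forall t, al < t <= x -> ~ Kset t).

Lemma beta_spec x : Eset x -> Kset (beta x) /\ x < beta x /\ forall t, x <= t < beta x -> ~ Kset t.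
Proof. intros HE. unfold beta. apply epsilon_spec. apply beta_ex; auto. Qed.

Lemma alpha_spec x : Eset x -> a <= alpha x <= x /\ (Kset (alpha x) \/ alpha x = a) /\ forall t, alpha x < t <= x -> ~ Kset t.
Proof. intros HE. unfold alpha. apply epsilon_spec. apply alpha_ex; auto. Qed.

Lemma comp_noK x : Eset x -> forall t, alpha x < t < beta x -> ~ Kset t.
Proof.
  intros HE t Ht. destruct (alpha_spec x HE) as [_ [_ A]]. destruct (beta_spec x HE) as [_ [_ B]].
  destruct (Rle_dec t x). apply A; lra. apply B; lra.
Qed.

Lemma comp_bounds x : Eset x -> a <= alpha x /\ alpha x <= x /\ x < beta x /\ beta x <= b.
Proof.
  intros HE. destruct (alpha_spec x HE) as [A _]. destruct (beta_spec x HE) as [[[_ B] _] [C _]]. lra.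
Qed.

Lemma comp_eq x z : Eset x -> Eset z -> alpha x <= z < beta x -> alpha z = alpha x /\ beta z = beta x.
Proof.
  intros Hx Hz Hzr.
  destruct (alpha_spec x Hx) as [Ax1 [Ax2 Ax3]]. destruct (beta_spec x Hx) as [Bx1 [Bx2 Bx3]].
  destruct (alpha_spec z Hz) as [Az1 [Az2 Az3]]. destruct (beta_spec z Hz) as [Bz1 [Bz2 Bz3]].
  pose proof (comp_noK x Hx) as Nx.
  pose proof (E_notK z Hz) as Nz.
  split.
  - destruct (Rtotal_order (alpha z) (alpha x)) as [Hl|[Heq|Hl]]; auto; exfalso.
    +
      assert (~ Kset (alpha x)) by (apply Az3; lra).
      destruct Ax2 as [HK|Ha]; [tauto|lra].
    + assert (~ Kset (alpha z)).
      { destruct (Req_dec (alpha z) z) as [->|]; auto. apply Nx; lra. }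
      destruct Az2 as [HK|Ha]; [tauto|lra].
  - destruct (Rtotal_order (beta z) (beta x)) as [Hl|[Heq|Hl]]; auto; exfalso.
    + assert (~ Kset (beta z)). { apply Nx; lra. } tauto.
    + assert (~ Kset (beta x)) by (apply Bz3; lra). tauto.
Qed.

Lemma comp_disjoint x z : Eset x -> Eset z -> (alpha x <> alpha z \/ beta x <> beta z) ->
  beta x <= alpha z \/ beta z <= alpha x.
Proof.
  intros Hx Hz Hne. apply NNPP; intro Hn.
  apply not_or_and in Hn. destruct Hn as [H1 H2].
  pose proof (comp_bounds x Hx). pose proof (comp_bounds z Hz).
  set (w := Rmax (alpha x) (alpha z)). set (w' := Rmin (beta x) (beta z)).
  assert (Hw : w < w').
  { unfold w, w', Rmax, Rmin. repeat destruct Rle_dec; lra. }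
  set (m := (w + w') / 2).
  assert (alpha x < m < beta x /\ alpha z < m < beta z).
  { unfold m, w, w' in *. unfold Rmax, Rmin in *. repeat destruct Rle_dec; lra. }
  assert (Hm : Eset m). { apply notK_E. lra. apply (comp_noK x Hx). lra. }
  destruct (comp_eq x m Hx Hm ltac:(lra)). destruct (comp_eq z m Hz Hm ltac:(lra)).
  destruct Hne; congruence.
Qed.

Lemma rising_ineq x : Eset x -> g (alpha x) <= g (beta x).
Proof.
  intros HE. pose proof (comp_bounds x HE) as [B1 [B2 [B3 B4]]].
  destruct (beta_spec x HE) as [HKb _].
  assert (Hm : forall m, alpha x <= m < beta x -> ~ Kset m -> g m <= g (beta x)).
  { intros m Hm HnK.
    destruct (argmax g m (beta x) g_cont ltac:(lra)) as [ms [Hms Hmax]].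
    destruct (Req_dec ms (beta x)) as [->|Hne]. apply Hmax; lra.
    exfalso.
    assert (HnKs : ~ Kset ms).
    { destruct (Req_dec ms m) as [->|]; auto. apply (comp_noK x HE). lra. }
    destruct (notK_E ms ltac:(lra) HnKs) as [_ [y [Hy Hy2]]].
    destruct (Rle_dec y (beta x)).
    - specialize (Hmax y ltac:(lra)). unfold g in Hmax. lra.
    - destruct HKb as [_ HKb]. specialize (HKb y ltac:(lra)). specialize (Hmax (beta x) ltac:(lra)).
      unfold g in *. lra. }
  destruct (classic (Kset (alpha x))) as [HKa|HnKa].
  - assert (Halx : alpha x < x). { destruct (Req_dec (alpha x) x) as [Heq|]; [|lra].
      exfalso. apply (E_notK x HE). rewrite <- Heq. auto. }
    apply Rnot_lt_le; intro Hlt.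
    destruct (gcont_eps g g_cont (alpha x) (g (alpha x) - g (beta x)) ltac:(lra)) as [r [Hr Hr2]].
    set (m := Rmin x (alpha x + r / 2)).
    assert (alpha x < m <= x) by (unfold m, Rmin; destruct Rle_dec; lra).
    assert (m - alpha x < r) by (unfold m, Rmin; destruct Rle_dec; lra).
    specialize (Hr2 m ltac:(rewrite Rabs_right; lra)).
    assert (g m <= g (beta x)).
    { apply Hm. lra. apply (comp_noK x HE). lra. }
    unfold Rabs in Hr2; destruct Rcase_abs in Hr2; lra.
  - apply Hm; auto. lra.
Qed.

Lemma comp_len x : Eset x -> eta * (beta x - alpha x) <= H (beta x) - H (alpha x).
Proof. intros HE. pose proof (rising_ineq x HE). unfold g in H0. lra. Qed.

Definition rpt (n : nat) : R := let (p, q) := Cantor.of_nat n in a + (b - a) * INR p / INR (S q).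

Lemma rpt_dense u v : a <= u -> u < v -> v <= b -> exists n, u < rpt n < v.
Proof.
  intros Hu Huv Hv.
  destruct (archimed ((b - a) / (v - u))) as [Harch _].
  set (q := Z.to_nat (up ((b - a) / (v - u)))).
  assert (Hq : (b - a) / (v - u) < INR (S q)).
  { unfold q. rewrite S_INR. rewrite INR_IZR_INZ.
    destruct (Z.le_gt_cases 0 (up ((b - a) / (v - u)))).
    - rewrite Z2Nat.id by auto. lra.
    - assert (0 < (b - a) / (v - u)) by (apply Rdiv_lt_0_compat; lra).
      assert (IZR (up ((b - a) / (v - u))) < 0) by (apply IZR_lt; lia). lra. }
  set (N := INR (S q)). assert (HN : 0 < N) by (unfold N; apply lt_0_INR; lia).
  set (P := fun p => u < a + (b - a) * INR p / N).
  assert (HPN : P (S q)). { unfold P. fold N. replace ((b - a) * N / N) with (b - a) by (field; lra). lra. }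
  destruct (least_nat P (ex_intro _ _ HPN)) as [p [HPp Hmin]].
  destruct p as [|p].
  - unfold P in HPp. simpl in HPp. unfold Rdiv in HPp. rewrite Rmult_0_r, Rmult_0_l in HPp. lra.
  - assert (Hn : ~ P p) by (apply Hmin; lia). unfold P in Hn, HPp.
    exists (Cantor.to_nat (S p, q)). unfold rpt. rewrite Cantor.cancel_of_to. fold N.
    split; auto.
    rewrite S_INR in HPp |- *.
    assert ((b - a) / N < v - u).
    { apply Rmult_lt_reg_r with (N / (v - u)). apply Rdiv_lt_0_compat; lra.
      field_simplify; try lra. unfold N. field_simplify in Hq; lra. }
    assert (a + (b - a) * (INR p + 1) / N = a + (b - a) * INR p / N + (b - a) / N) by (field; lra).
    lra.
Qed.

Definition chosen n := Eset (rpt n) /\ forall m, (m < n)%nat -> ~ (Eset (rpt m) /\ alpha (rpt m) = alpha (rpt n) /\ beta (rpt m) = beta (rpt n)).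

Lemma rising_sun_cover : forall e, 0 < e -> exists lo hi : nat -> R,
  (forall n, lo n <= hi n) /\ (forall N, lensum lo hi N <= (H b - H a) / eta + e) /\
  (forall x, Eset x -> exists n, lo n < x < hi n).
Proof.
  intros e He.
  set (lo := fun n => if excluded_middle_informative (chosen n) then alpha (rpt n) - e / 2 ^ (S n) else 0).
  set (hi := fun n => if excluded_middle_informative (chosen n) then beta (rpt n) else 0).
  assert (Hp2 : forall n, 0 < e / 2 ^ (S n)) by (intros; apply Rdiv_lt_0_compat; auto; apply pow_lt; lra).
  exists lo, hi. split; [|split].
  - intros n. unfold lo, hi. destruct excluded_middle_informative as [[HE _]|]; [|lra].
    pose proof (comp_bounds _ HE). pose proof (Hp2 n). lra.
  - intros N. rewrite lensum_fsum.
    assert (Hdis : forall n m, n <> m -> chosen n -> chosen m ->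
              beta (rpt n) <= alpha (rpt m) \/ beta (rpt m) <= alpha (rpt n)).
    { intros n m Hnm [Hn Hn2] [Hm Hm2]. apply comp_disjoint; auto.
      destruct (Nat.lt_gt_cases n m) as [[Hlt|Hlt] _]; auto.
      - specialize (Hm2 n Hlt). apply NNPP; intro Hc. apply Hm2. split; auto.
        apply not_or_and in Hc. destruct Hc. split; apply NNPP; auto.
      - specialize (Hn2 m Hlt). apply NNPP; intro Hc. apply Hn2. split; auto.
        apply not_or_and in Hc. destruct Hc. split; apply NNPP; auto; intro; congruence. }
    assert (HD := disjoint_sum H (fun n => alpha (rpt n)) (fun n => beta (rpt n)) chosen
      ltac:(intros n [HE _]; pose proof (comp_bounds _ HE); lra) Hdis N chosen a b ltac:(lra)
      Hmono ltac:(intros n _ Hc; split; auto; destruct Hc as [HE _]; pose proof (comp_bounds _ HE); lra)).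
    apply Rle_trans with (fsum (fun n => / eta * indR (chosen n) (H (beta (rpt n)) - H (alpha (rpt n))) + e / 2 ^ (S n)) N).
    + apply fsum_le. intros n _. unfold lo, hi, indR.
      destruct excluded_middle_informative as [Hc|Hc].
      * destruct Hc as [HE _]. pose proof (comp_len _ HE).
        assert (beta (rpt n) - alpha (rpt n) <= / eta * (H (beta (rpt n)) - H (alpha (rpt n)))).
        { apply Rmult_le_reg_l with eta; auto. rewrite <- Rmult_assoc, Rinv_r, Rmult_1_l; lra. }
        lra.
      * pose proof (Hp2 n). lra.
    + rewrite fsum_plus, fsum_scal. pose proof (fsum_geom_le e N ltac:(lra)).
      unfold Rdiv at 1. assert (0 < / eta) by (apply Rinv_0_lt_compat; auto).
      assert (/ eta * fsum (fun n => indR (chosen n) (H (beta (rpt n)) - H (alpha (rpt n)))) N <= / eta * (H b - H a)).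
      { apply Rmult_le_compat_l; lra. }
      lra.
  - intros x HE. pose proof (comp_bounds x HE) as [B1 [B2 [B3 B4]]].
    destruct (rpt_dense (Rmax a (alpha x)) (beta x)) as [n0 Hn0].
    apply Rmax_l. unfold Rmax; destruct Rle_dec; lra. lra.
    assert (Hrn0 : alpha x < rpt n0 < beta x) by (pose proof (Rmax_r a (alpha x)); lra).
    assert (HEn0 : Eset (rpt n0)).
    { apply notK_E. pose proof (Rmax_l a (alpha x)). lra. apply (comp_noK x HE). lra. }
    set (P := fun n => Eset (rpt n) /\ alpha (rpt n) = alpha x /\ beta (rpt n) = beta x).
    assert (HP0 : P n0). { split; auto. apply (comp_eq x (rpt n0)); auto; lra. }
    destruct (least_nat P (ex_intro _ _ HP0)) as [n [[HEn [Han Hbn]] Hmin]].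
    assert (Hch : chosen n).
    { split; auto. intros m Hm [HEm [Ham Hbm]]. apply (Hmin m Hm). split; auto. split; congruence. }
    exists n. unfold lo, hi. destruct excluded_middle_informative; [|tauto].
    rewrite Han, Hbn. pose proof (Hp2 n). lra.
Qed.

End RisingSun.

Definition box (w : nat -> nat -> R) B := fsum (fun j => fsum (fun i => w j i) B) B.

Lemma fsum_zero N : fsum (fun _ => 0) N = 0.
Proof. induction N; simpl; auto. rewrite IHN; ring. Qed.

Lemma fsum_point i0 v B : fsum (fun i => if Nat.eqb i i0 then v else 0) B = if Nat.ltb i0 B then v else 0.
Proof.
  induction B; simpl. destruct i0; auto.
  rewrite IHB. destruct (Nat.eqb B i0) eqn:E1.
  - apply Nat.eqb_eq in E1. subst i0. replace (Nat.ltb B B) with false by (symmetry; apply Nat.ltb_ge; lia).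
    replace (Nat.ltb B (S B)) with true by (symmetry; apply Nat.ltb_lt; lia). ring.
  - apply Nat.eqb_neq in E1. destruct (Nat.ltb i0 B) eqn:E2.
    + apply Nat.ltb_lt in E2. replace (Nat.ltb i0 (S B)) with true by (symmetry; apply Nat.ltb_lt; lia). ring.
    + apply Nat.ltb_ge in E2. replace (Nat.ltb i0 (S B)) with false by (symmetry; apply Nat.ltb_ge; lia). ring.
Qed.

Lemma box_point B j0 i0 v : (j0 < B)%nat -> (i0 < B)%nat ->
  box (fun j i => if andb (Nat.eqb j j0) (Nat.eqb i i0) then v else 0) B = v.
Proof.
  intros Hj Hi. unfold box.
  rewrite (fsum_ext _ (fun j => if Nat.eqb j j0 then v else 0)).
  rewrite fsum_point. replace (Nat.ltb j0 B) with true by (symmetry; apply Nat.ltb_lt; lia). auto.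
  intros j _. destruct (Nat.eqb j j0); simpl.
  - rewrite fsum_point. replace (Nat.ltb i0 B) with true by (symmetry; apply Nat.ltb_lt; lia). auto.
  - apply fsum_zero.
Qed.

Lemma box_le w1 w2 B : (forall j i, w1 j i <= w2 j i) -> box w1 B <= box w2 B.
Proof. intros H. unfold box. apply fsum_le. intros. apply fsum_le. intros; auto. Qed.

Lemma box_plus w1 w2 B : box (fun j i => w1 j i + w2 j i) B = box w1 B + box w2 B.
Proof. unfold box. rewrite <- fsum_plus. apply fsum_ext. intros. apply fsum_plus. Qed.

Lemma inj_sum (phi : nat -> nat * nat) B : (forall n m, phi n = phi m -> n = m) ->
  forall N (w : nat -> nat -> R), (forall j i, 0 <= w j i) ->
  (forall n, (n < N)%nat -> (fst (phi n) < B)%nat /\ (snd (phi n) < B)%nat) ->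
  fsum (fun n => w (fst (phi n)) (snd (phi n))) N <= box w B.
Proof.
  intros Hinj N. induction N; intros w Hw Hb; simpl.
  - unfold box. apply fsum_nonneg. intros. apply fsum_nonneg. auto.
  - set (j0 := fst (phi N)). set (i0 := snd (phi N)).
    set (w' := fun j i => if andb (Nat.eqb j j0) (Nat.eqb i i0) then 0 else w j i).
    assert (E1 : fsum (fun n => w (fst (phi n)) (snd (phi n))) N = fsum (fun n => w' (fst (phi n)) (snd (phi n))) N).
    { apply fsum_ext. intros n Hn. unfold w'.
      destruct (Nat.eqb (fst (phi n)) j0) eqn:A; destruct (Nat.eqb (snd (phi n)) i0) eqn:B'; simpl; auto.
      apply Nat.eqb_eq in A. apply Nat.eqb_eq in B'. exfalso.
      assert (phi n = phi N). { rewrite (surjective_pairing (phi n)), (surjective_pairing (phi N)). unfold j0, i0 in *. congruence. }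
      apply Hinj in H. lia. }
    rewrite E1.
    assert (IH := IHN w' ltac:(intros j i; unfold w'; destruct andb; [lra|auto]) ltac:(intros n Hn; apply Hb; lia)).
    assert (E2 : box w B = box w' B + box (fun j i => if andb (Nat.eqb j j0) (Nat.eqb i i0) then w j0 i0 else 0) B).
    { rewrite <- box_plus. unfold box. apply fsum_ext; intros j _. apply fsum_ext; intros i _. unfold w'.
      destruct (Nat.eqb j j0) eqn:A; destruct (Nat.eqb i i0) eqn:B'; simpl; try ring.
      apply Nat.eqb_eq in A. apply Nat.eqb_eq in B'. subst. ring. }
    rewrite E2, box_point. fold j0 i0. lra. apply Hb; lia. apply Hb; lia.
Qed.

Definition cover_by (A : R -> Prop) (c : R) (lo hi : nat -> R) :=
  (forall n, lo n <= hi n) /\ (forall N, lensum lo hi N <= c) /\ (forall x, A x -> exists n, lo n < x < hi n).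

Lemma union_cover (A : nat -> R -> Prop) (c : nat -> R) C :
  (forall j, exists lo hi, cover_by (A j) (c j) lo hi) -> (forall J, fsum c J <= C) ->
  exists lo hi, cover_by (fun x => exists j, A j x) C lo hi.
Proof.
  intros Hc HC.
  set (cov := fun j => epsilon (inhabits ((fun _ : nat => 0), (fun _ : nat => 0)))
                 (fun p => cover_by (A j) (c j) (fst p) (snd p))).
  assert (Hcov : forall j, cover_by (A j) (c j) (fst (cov j)) (snd (cov j))).
  { intros j. unfold cov. apply (epsilon_spec (inhabits ((fun _ : nat => 0), (fun _ : nat => 0))) (fun p => cover_by (A j) (c j) (fst p) (snd p))).
    destruct (Hc j) as [lo [hi H]]. exists (lo, hi). auto. }
  set (w := fun j i => snd (cov j) i - fst (cov j) i).
  assert (Hw : forall j i, 0 <= w j i). { intros. unfold w. destruct (Hcov j) as [H _]. specialize (H i). lra. }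
  exists (fun n => fst (cov (fst (Cantor.of_nat n))) (snd (Cantor.of_nat n))),
         (fun n => snd (cov (fst (Cantor.of_nat n))) (snd (Cantor.of_nat n))).
  split; [|split].
  - intros n. destruct (Hcov (fst (Cantor.of_nat n))) as [H _]. apply H.
  - intros N. rewrite lensum_fsum.
    apply Rle_trans with (box w N).
    + assert (Hinj : forall n m, Cantor.of_nat n = Cantor.of_nat m -> n = m).
      { intros n m H. rewrite <- (Cantor.cancel_to_of n), <- (Cantor.cancel_to_of m). rewrite H. auto. }
      apply (inj_sum Cantor.of_nat N Hinj N w Hw).
      intros n Hn. pose proof (Cantor.to_nat_non_decreasing (fst (Cantor.of_nat n)) (snd (Cantor.of_nat n))).
      rewrite <- surjective_pairing, Cantor.cancel_to_of in H. lia.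
    + unfold box. apply Rle_trans with (fsum c N); auto.
      apply fsum_le. intros j _. unfold w. rewrite <- lensum_fsum. destruct (Hcov j) as [_ [H _]]. apply H.
  - intros x [j Hj]. destruct (Hcov j) as [_ [_ H]]. destruct (H x Hj) as [i Hi].
    exists (Cantor.to_nat (j, i)). rewrite Cantor.cancel_of_to. simpl. auto.
Qed.



Lemma nat_gt r : exists n : nat, r < INR n.
Proof.
  destruct (archimed r) as [H _]. destruct (Z.le_gt_cases 0 (up r)).
  - exists (Z.to_nat (up r)). rewrite INR_IZR_INZ. rewrite Z2Nat.id by auto. lra.
  - exists O. assert (IZR (up r) < 0) by (apply IZR_lt; lia). simpl. lra.
Qed.

Lemma pow2_ge n : INR n + 1 <= 2 ^ n.
Proof. induction n. simpl; lra. rewrite S_INR. simpl. assert (1 <= 2 ^ n) by (apply pow_R1_Rle; lra). lra. Qed.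

Lemma LR_ext (G1 G2 : R -> R) x d s : (forall y, G1 y = G2 y) -> LR G1 x d s = LR G2 x d s.
Proof. intros H. unfold LR, Kr. f_equal. apply RInt_ext. intros t _. rewrite !H. auto. Qed.

Lemma cover_mono A c c' lo hi : c <= c' -> cover_by A c lo hi -> cover_by A c' lo hi.
Proof. intros Hc [H1 [H2 H3]]. split; auto. split; auto. intros N; specialize (H2 N); lra. Qed.

Lemma cover_empty c : 0 <= c -> cover_by (fun _ => False) c (fun _ => 0) (fun _ => 0).
Proof.
  intros Hc. split. intros; lra. split. intros N. rewrite lensum_fsum.
  rewrite (fsum_ext _ (fun _ => 0)) by (intros; ring). rewrite fsum_zero; auto. tauto.
Qed.

Lemma cover_neg A c lo hi : cover_by A c lo hi -> cover_by (fun x => A (- x)) c (fun n => - hi n) (fun n => - lo n).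
Proof.
  intros [H1 [H2 H3]]. split. intros n; specialize (H1 n); lra. split.
  intros N. rewrite lensum_fsum. rewrite (fsum_ext _ (fun n => hi n - lo n)) by (intros; ring).
  rewrite <- lensum_fsum; auto.
  intros x Hx. destruct (H3 _ Hx) as [n Hn]. exists n. lra.
Qed.

Definition mono_on (p q : R) (G : R -> R) := forall u v, p <= u <= v -> v <= q -> G u <= G v.

Lemma cover_right p q eta (G : R -> R) c0 : p < q -> 0 < eta -> 0 < c0 -> gcont G -> mono_on p q G ->
  G q - G p <= eta * c0 -> exists lo hi, cover_by (Eset p q eta G) (2 * c0) lo hi.
Proof.
  intros Hpq He Hc HG Hm Hgap.
  destruct (rising_sun_cover p q eta G Hpq He HG Hm c0 Hc) as [lo [hi [H1 [H2 H3]]]].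
  exists lo, hi. split; auto. split; auto. intros N. specialize (H2 N).
  assert ((G q - G p) / eta <= c0).
  { apply Rmult_le_reg_r with eta; auto. unfold Rdiv. rewrite Rmult_assoc, Rinv_l by lra. lra. }
  lra.
Qed.

Definition Refl (G : R -> R) := fun y => - G (- y).

Lemma cover_left p q eta (G : R -> R) c0 : p < q -> 0 < eta -> 0 < c0 -> gcont G -> mono_on p q G ->
  G q - G p <= eta * c0 -> exists lo hi, cover_by (fun x => Eset (-q) (-p) eta (Refl G) (- x)) (2 * c0) lo hi.
Proof.
  intros Hpq He Hc HG Hm Hgap.
  assert (A1 : gcont (Refl G)) by (apply gcont_refl; auto).
  assert (A2 : mono_on (-q) (-p) (Refl G)).
  { intros u v Huv Hv. unfold Refl. assert (G (- v) <= G (- u)) by (apply Hm; lra). lra. }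
  assert (A3 : Refl G (-p) - Refl G (-q) <= eta * c0) by (unfold Refl; rewrite !Ropp_involutive; lra).
  destruct (cover_right (-q) (-p) eta (Refl G) c0 ltac:(lra) He Hc A1 A2 A3) as [lo [hi H]].
  exists (fun n => - hi n), (fun n => - lo n). apply (cover_neg (Eset (-q) (-p) eta (Refl G))). auto.
Qed.

Lemma notE_bound p q eta (G : R -> R) x : p <= x < q -> ~ Eset p q eta G x ->
  forall y, x < y <= q -> G y - G x <= eta * (y - x).
Proof.
  intros Hx Hn y Hy. apply Rnot_lt_le. intro Hlt. apply Hn. split; auto. exists y. split; auto.
Qed.

Section Final.
Variables (a b I : R) (f F : R -> R).
Hypothesis Hab : a < b.
Hypothesis HI : is_laplace a b f I.
Hypothesis HFa : F a = 0.
Hypothesis HF : forall x, a < x <= b -> F x = laplace_int a x f.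

Lemma F_cont : continuous_on_interval a b F.
Proof.
  destruct (gap_pair a b f I HI 1 ltac:(lra)) as [U0 [V0 [HU0 [HV0 _]]]].
  intros x Hx eps Heps.
  destruct (proj1 HU0 x Hx eps Heps) as [d1 [Hd1 Hd1']].
  destruct (proj1 HV0 x Hx eps Heps) as [d2 [Hd2 Hd2']].
  exists (Rmin d1 d2). split. apply Rmin_glb_lt; auto.
  intros y Hy Hyx.
  assert (Rabs (y - x) < d1) by (eapply Rlt_le_trans; [apply Hyx|apply Rmin_l]).
  assert (Rabs (y - x) < d2) by (eapply Rlt_le_trans; [apply Hyx|apply Rmin_r]).
  specialize (Hd1' y Hy H). specialize (Hd2' y Hy H0).
  destruct (Rle_dec x y).
  - pose proof (F_incr a b I f F Hab HI HFa HF x y U0 V0 ltac:(lra) r ltac:(lra) HU0 HV0).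
    unfold Rabs in *; repeat destruct Rcase_abs; lra.
  - pose proof (F_incr a b I f F Hab HI HFa HF y x U0 V0 ltac:(lra) ltac:(lra) ltac:(lra) HU0 HV0).
    unfold Rabs in *; repeat destruct Rcase_abs; lra.
Qed.

Definition etak (k : nat) := / INR (S k).
Definition gapk (k : nat) := etak k / (4 * 2 ^ k).

Lemma etak_pos k : 0 < etak k.
Proof. unfold etak. apply Rinv_0_lt_compat, lt_0_INR; lia. Qed.

Lemma gapk_pos k : 0 < gapk k.
Proof. unfold gapk. apply Rdiv_lt_0_compat. apply etak_pos. assert (0 < 2 ^ k) by (apply pow_lt; lra). lra. Qed.

Definition pairk (k : nat) := epsilon (inhabits ((fun _ : R => 0), (fun _ : R => 0)))
  (fun p => major_function a b f (fst p) /\ minor_function a b f (snd p) /\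
            (fst p b - fst p a) - (snd p b - snd p a) < gapk k).

Lemma pairk_spec k : major_function a b f (fst (pairk k)) /\ minor_function a b f (snd (pairk k)) /\
   (fst (pairk k) b - fst (pairk k) a) - (snd (pairk k) b - snd (pairk k) a) < gapk k.
Proof.
  unfold pairk. apply (epsilon_spec (inhabits ((fun _ : R => 0), (fun _ : R => 0)))
  (fun p => major_function a b f (fst p) /\ minor_function a b f (snd p) /\
            (fst p b - fst p a) - (snd p b - snd p a) < gapk k)).
  destruct (gap_pair a b f I HI (gapk k) (gapk_pos k)) as [U [V H]]. exists (U, V). auto.
Qed.

Definition Uk k := fst (pairk k).
Definition Vk k := snd (pairk k).
Definition Fc := Cl a b F.
Definition Gk k := fun y => Cl a b (Uk k) y - Fc y.
Definition Hk k := fun y => Fc y - Cl a b (Vk k) y.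

Lemma Fc_gcont : gcont Fc.
Proof. apply gcont_Cl. lra. apply F_cont. Qed.

Lemma Gk_good k : gcont (Gk k) /\ mono_on a b (Gk k) /\ Gk k b - Gk k a <= etak k * / (4 * 2 ^ k).
Proof.
  destruct (pairk_spec k) as [HU [HV Hg]].
  split. apply gcont_minus. apply gcont_Cl. lra. apply HU. apply Fc_gcont.
  split.
  - intros u v Huv Hv. unfold Gk, Fc, Cl. rewrite !clamp_id by lra.
    pose proof (F_incr a b I f F Hab HI HFa HF u v (Uk k) (Vk k) ltac:(lra) ltac:(lra) ltac:(lra) HU HV). lra.
  - unfold Gk, Fc, Cl. rewrite !clamp_id by lra.
    pose proof (F_incr a b I f F Hab HI HFa HF a b (Uk k) (Vk k) ltac:(lra) ltac:(lra) ltac:(lra) HU HV).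
    unfold gapk in Hg. unfold Uk, Vk in *. unfold Rdiv in Hg. lra.
Qed.

Lemma Hk_good k : gcont (Hk k) /\ mono_on a b (Hk k) /\ Hk k b - Hk k a <= etak k * / (4 * 2 ^ k).
Proof.
  destruct (pairk_spec k) as [HU [HV Hg]].
  split. apply gcont_minus. apply Fc_gcont. apply gcont_Cl. lra. apply HV.
  split.
  - intros u v Huv Hv. unfold Hk, Fc, Cl. rewrite !clamp_id by lra.
    pose proof (F_incr a b I f F Hab HI HFa HF u v (Uk k) (Vk k) ltac:(lra) ltac:(lra) ltac:(lra) HU HV). lra.
  - unfold Hk, Fc, Cl. rewrite !clamp_id by lra.
    pose proof (F_incr a b I f F Hab HI HFa HF a b (Uk k) (Vk k) ltac:(lra) ltac:(lra) ltac:(lra) HU HV).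
    unfold gapk in Hg. unfold Uk, Vk in *. unfold Rdiv in Hg. lra.
Qed.

Definition fam (k r : nat) (x : R) : Prop :=
  match r with
  | O => Eset a b (etak k) (Gk k) x
  | 1%nat => Eset (-b) (-a) (etak k) (Refl (Gk k)) (- x)
  | 2%nat => Eset a b (etak k) (Hk k) x
  | 3%nat => Eset (-b) (-a) (etak k) (Refl (Hk k)) (- x)
  | _ => False
  end.

Definition Ak k x := exists r, fam k r x.

Lemma Ak_cover k : exists lo hi, cover_by (Ak k) (8 / 2 ^ k) lo hi.
Proof.
  assert (Hp : 0 < 2 ^ k) by (apply pow_lt; lra).
  set (c0 := / (4 * 2 ^ k)).
  assert (Hc0 : 0 < c0) by (unfold c0; apply Rinv_0_lt_compat; lra).
  apply (union_cover (fam k) (fun r => (8 / 2 ^ k) / 2 ^ (S r))).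
  - intros r.
    assert (Hb : forall r', (r' <= 3)%nat -> 2 * c0 <= (8 / 2 ^ k) / 2 ^ (S r')).
    { intros r' Hr'. unfold c0.
      assert (2 ^ (S r') <= 16).
      { replace 16 with (2 ^ 4) by (simpl; ring). apply Rle_pow; [lra|lia]. }
      assert (0 < 2 ^ (S r')) by (apply pow_lt; lra).
      unfold Rdiv. rewrite Rinv_mult.
      apply Rle_trans with (8 * / 2 ^ k * / 16).
      - right. field. lra.
      - apply Rmult_le_compat_l. apply Rmult_le_pos; [lra|left; apply Rinv_0_lt_compat; auto].
        apply Rinv_le_contravar; auto. }
    destruct (Gk_good k) as [G1 [G2 G3]]. destruct (Hk_good k) as [H1 [H2 H3]].
    pose proof (etak_pos k).
    destruct r as [|[|[|[|r]]]]; cbn [fam].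
    + destruct (cover_right a b (etak k) (Gk k) c0 Hab H Hc0 G1 G2 G3) as [lo [hi Hc]].
      exists lo, hi. eapply cover_mono; [|apply Hc]. apply Hb; lia.
    + destruct (cover_left a b (etak k) (Gk k) c0 Hab H Hc0 G1 G2 G3) as [lo [hi Hc]].
      exists lo, hi. eapply cover_mono; [|apply Hc]. apply Hb; lia.
    + destruct (cover_right a b (etak k) (Hk k) c0 Hab H Hc0 H1 H2 H3) as [lo [hi Hc]].
      exists lo, hi. eapply cover_mono; [|apply Hc]. apply Hb; lia.
    + destruct (cover_left a b (etak k) (Hk k) c0 Hab H Hc0 H1 H2 H3) as [lo [hi Hc]].
      exists lo, hi. eapply cover_mono; [|apply Hc]. apply Hb; lia.
    + exists (fun _ => 0), (fun _ => 0). apply cover_empty.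
      apply Rdiv_le_0_compat. apply Rdiv_le_0_compat; lra. apply pow_lt; lra.
  - intros J. apply fsum_geom_le. apply Rdiv_le_0_compat; lra.
Qed.

Definition Nset x := forall m, exists k, (m <= k)%nat /\ Ak k x.

Lemma Nset_null : null_set Nset.
Proof.
  intros eps Heps.
  destruct (nat_gt (16 / eps)) as [m Hm].
  assert (Hm2 : 16 / 2 ^ m < eps).
  { pose proof (pow2_ge m). assert (0 < 2 ^ m) by (apply pow_lt; lra).
    assert (Hlt : 16 / eps < 2 ^ m) by lra.
    assert (E : 16 / eps * eps = 16) by (field; lra).
    assert (16 < 2 ^ m * eps) by nra.
    unfold Rdiv. apply Rmult_lt_reg_r with (2 ^ m); auto.
    rewrite Rmult_assoc, Rinv_l by lra. lra. }
  destruct (union_cover (fun j => Ak (m + j)) (fun j => (16 / 2 ^ m) / 2 ^ (S j)) (16 / 2 ^ m)) as [lo [hi [H1 [H2 H3]]]].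
  - intros j. destruct (Ak_cover (m + j)) as [lo [hi Hc]]. exists lo, hi.
    eapply cover_mono; [|apply Hc]. right. rewrite pow_add. simpl. field.
    split; apply pow_nonzero; lra.
  - intros J. apply fsum_geom_le. apply Rdiv_le_0_compat. lra. apply pow_lt; lra.
  - exists lo, hi. split; auto. split. intros N; specialize (H2 N); lra.
    intros x Hx. apply H3. destruct (Hx m) as [k [Hk HA]]. exists (k - m)%nat.
    replace (m + (k - m))%nat with k by lia. auto.
Qed.


Lemma Fc_eq y : a <= y <= b -> Fc y = F y.
Proof. intros Hy. unfold Fc, Cl. rewrite clamp_id; auto. Qed.

Lemma right_est x k d : a <= x < b -> ~ Ak k x -> 0 < d -> x + d <= b ->
  forall eta, 0 < eta -> exists M, forall s, M <= s ->
    f x - eta - etak k < LR Fc x d s < f x + eta + etak k.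
Proof.
  intros Hx HA Hd Hxd eta Heta.
  destruct (pairk_spec k) as [HU [HV _]].
  destruct (Gk_good k) as [G1 [G2 _]]. destruct (Hk_good k) as [H1 [H2 _]].
  pose proof (etak_pos k) as Hek.
  assert (HnG : ~ Eset a b (etak k) (Gk k) x) by (intro; apply HA; exists O; auto).
  assert (HnH : ~ Eset a b (etak k) (Hk k) x) by (intro; apply HA; exists 2%nat; auto).
  assert (BG : forall s, 0 < s -> 0 <= LR (Gk k) x d s <= etak k).
  { intros s Hs. apply LR_bounds; auto; try lra. intros t Ht. split.
    - assert (Gk k x <= Gk k (x + t)) by (apply G2; lra). lra.
    - destruct (Req_dec t 0) as [->|]. rewrite Rplus_0_r. lra.
      pose proof (notE_bound a b (etak k) (Gk k) x Hx HnG (x + t) ltac:(lra)). 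
      replace (x + t - x) with t in H0 by ring. lra. }
  assert (BH : forall s, 0 < s -> 0 <= LR (Hk k) x d s <= etak k).
  { intros s Hs. apply LR_bounds; auto; try lra. intros t Ht. split.
    - assert (Hk k x <= Hk k (x + t)) by (apply H2; lra). lra.
    - destruct (Req_dec t 0) as [->|]. rewrite Rplus_0_r. lra.
      pose proof (notE_bound a b (etak k) (Hk k) x Hx HnH (x + t) ltac:(lra)). 
      replace (x + t - x) with t in H0 by ring. lra. }
  assert (EU : forall s, LR Fc x d s = LR (Cl a b (Uk k)) x d s - LR (Gk k) x d s).
  { intros s. rewrite <- LR_minus; auto. apply LR_ext. intros y. unfold Gk. ring.
    apply gcont_Cl; [lra|apply HU]. }
  assert (EV : forall s, LR Fc x d s = LR (Cl a b (Vk k)) x d s + LR (Hk k) x d s).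
  { intros s. rewrite <- LR_plus; auto. apply LR_ext. intros y. unfold Hk. ring.
    apply gcont_Cl; [lra|apply HV]. }
  destruct (major_right_LR a b f (Uk k) x d Hab HU Hx Hd Hxd eta Heta) as [M1 HM1].
  destruct (minor_right_LR a b f (Vk k) x d Hab HV Hx Hd Hxd eta Heta) as [M2 HM2].
  exists (Rmax 1 (Rmax M1 M2)). intros s Hs.
  assert (Hs1 : 1 <= s) by (eapply Rle_trans; [apply Rmax_l|apply Hs]).
  assert (Hs2 : M1 <= s) by (eapply Rle_trans; [|apply Hs]; eapply Rle_trans; [apply Rmax_l|apply Rmax_r]).
  assert (Hs3 : M2 <= s) by (eapply Rle_trans; [|apply Hs]; eapply Rle_trans; [apply Rmax_r|apply Rmax_r]).
  specialize (HM1 s Hs2). specialize (HM2 s Hs3). specialize (BG s ltac:(lra)). specialize (BH s ltac:(lra)).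
  rewrite (EU s) at 1. rewrite (EV s). lra.
Qed.

Lemma left_est x k d : a < x <= b -> ~ Ak k x -> 0 < d -> a <= x - d ->
  forall eta, 0 < eta -> exists M, forall s, M <= s ->
    f x - eta - etak k < LR (Cr a b F) (- x) d s < f x + eta + etak k.
Proof.
  intros Hx HA Hd Hxd eta Heta.
  destruct (pairk_spec k) as [HU [HV _]].
  destruct (Gk_good k) as [G1 [G2 _]]. destruct (Hk_good k) as [H1 [H2 _]].
  pose proof (etak_pos k) as Hek.
  assert (HnG : ~ Eset (-b) (-a) (etak k) (Refl (Gk k)) (-x)) by (intro; apply HA; exists 1%nat; auto).
  assert (HnH : ~ Eset (-b) (-a) (etak k) (Refl (Hk k)) (-x)) by (intro; apply HA; exists 3%nat; auto).
  assert (RG1 : gcont (Refl (Gk k))) by (apply gcont_refl; auto).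
  assert (RH1 : gcont (Refl (Hk k))) by (apply gcont_refl; auto).
  assert (BG : forall s, 0 < s -> 0 <= LR (Refl (Gk k)) (-x) d s <= etak k).
  { intros s Hs. apply LR_bounds; auto; try lra. intros t Ht. split.
    - unfold Refl. replace (- (- x + t)) with (x - t) by ring. rewrite Ropp_involutive.
      assert (Gk k (x - t) <= Gk k x) by (apply G2; lra). lra.
    - destruct (Req_dec t 0) as [->|]. rewrite Rplus_0_r. lra.
      pose proof (notE_bound (-b) (-a) (etak k) (Refl (Gk k)) (-x) ltac:(lra) HnG (-x + t) ltac:(lra)).
      replace (- x + t - - x) with t in H0 by ring. lra. }
  assert (BH : forall s, 0 < s -> 0 <= LR (Refl (Hk k)) (-x) d s <= etak k).
  { intros s Hs. apply LR_bounds; auto; try lra. intros t Ht. split.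
    - unfold Refl. replace (- (- x + t)) with (x - t) by ring. rewrite Ropp_involutive.
      assert (Hk k (x - t) <= Hk k x) by (apply H2; lra). lra.
    - destruct (Req_dec t 0) as [->|]. rewrite Rplus_0_r. lra.
      pose proof (notE_bound (-b) (-a) (etak k) (Refl (Hk k)) (-x) ltac:(lra) HnH (-x + t) ltac:(lra)).
      replace (- x + t - - x) with t in H0 by ring. lra. }
  assert (EU : forall s, LR (Cr a b F) (-x) d s = LR (Cr a b (Uk k)) (-x) d s - LR (Refl (Gk k)) (-x) d s).
  { intros s. rewrite <- LR_minus; auto. apply LR_ext. intros y. unfold Refl, Gk, Cr, Fc, Cl. ring.
    apply gcont_Cr; [lra|apply HU]. }
  assert (EV : forall s, LR (Cr a b F) (-x) d s = LR (Cr a b (Vk k)) (-x) d s + LR (Refl (Hk k)) (-x) d s).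
  { intros s. rewrite <- LR_plus; auto. apply LR_ext. intros y. unfold Refl, Hk, Cr, Fc, Cl. ring.
    apply gcont_Cr; [lra|apply HV]. }
  destruct (major_left_LR a b f (Uk k) x d Hab HU Hx Hd Hxd eta Heta) as [M1 HM1].
  destruct (minor_left_LR a b f (Vk k) x d Hab HV Hx Hd Hxd eta Heta) as [M2 HM2].
  exists (Rmax 1 (Rmax M1 M2)). intros s Hs.
  assert (Hs1 : 1 <= s) by (eapply Rle_trans; [apply Rmax_l|apply Hs]).
  assert (Hs2 : M1 <= s) by (eapply Rle_trans; [|apply Hs]; eapply Rle_trans; [apply Rmax_l|apply Rmax_r]).
  assert (Hs3 : M2 <= s) by (eapply Rle_trans; [|apply Hs]; eapply Rle_trans; [apply Rmax_r|apply Rmax_r]).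
  specialize (HM1 s Hs2). specialize (HM2 s Hs3). specialize (BG s ltac:(lra)). specialize (BH s ltac:(lra)).
  rewrite (EU s) at 1. rewrite (EV s). lra.
Qed.

Lemma lim_of_est (h : R -> R) c m :
  (forall k, (m <= k)%nat -> forall eta, 0 < eta -> exists M, forall s, M <= s ->
      c - eta - etak k < h s < c + eta + etak k) ->
  is_lim h p_infty (Finite c).
Proof.
  intros Hk. apply is_lim_spec. intros eps. simpl.
  destruct (nat_gt (2 / eps)) as [n Hn].
  set (k := (m + n)%nat).
  assert (Hek : etak k < eps / 2).
  { unfold etak. assert (Hp := cond_pos eps).
    assert (INR n <= INR k) by (apply le_INR; unfold k; lia).
    assert (HS : INR (S k) = INR k + 1) by apply S_INR.
    assert (0 < INR (S k)) by (apply lt_0_INR; lia).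
    assert (2 / eps * eps = 2) by (field; lra).
    assert (2 < INR (S k) * eps) by nra.
    apply Rmult_lt_reg_r with (INR (S k)); auto. rewrite Rinv_l by lra. lra. }
  destruct (Hk k ltac:(unfold k; lia) (eps / 2) ltac:(pose proof (cond_pos eps); lra)) as [M HM].
  exists M. intros s Hs. specialize (HM s ltac:(lra)).
  unfold Rabs; destruct Rcase_abs; lra.
Qed.

Lemma LD1_good x : a <= x <= b -> ~ Nset x -> LD1 a b F x (f x).
Proof.
  intros Hx HN.
  assert (Hm : exists m, forall k, (m <= k)%nat -> ~ Ak k x).
  { apply NNPP; intro Hn. apply HN. intros m. apply NNPP; intro Hn2. apply Hn. exists m.
    intros k Hk HA. apply Hn2. exists k; auto. }
  destruct Hm as [m Hm].
  set (d := Rmin (if Rlt_dec x b then b - x else b - a) (if Rlt_dec a x then x - a else b - a)).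
  assert (Hd : 0 < d) by (unfold d; apply Rmin_glb_lt; [destruct (Rlt_dec x b)|destruct (Rlt_dec a x)]; lra).
  assert (Hdr : x < b -> x + d <= b).
  { intros Hxb. unfold d. pose proof (Rmin_l (if Rlt_dec x b then b - x else b - a) (if Rlt_dec a x then x - a else b - a)).
    destruct (Rlt_dec x b); lra. }
  assert (Hdl : a < x -> a <= x - d).
  { intros Hax. unfold d. pose proof (Rmin_r (if Rlt_dec x b then b - x else b - a) (if Rlt_dec a x then x - a else b - a)).
    destruct (Rlt_dec a x); lra. }
  fold d in Hdr, Hdl.
  pose proof F_cont as HFc.
  exists d. split; [split; [auto|split]|split].
  - intros Hxb. specialize (Hdr Hxb). split; auto.
    apply (perron_integrable_cont _ Fc). lra. apply Fc_gcont. intros u Hu. rewrite Fc_eq; auto. lra.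
  - intros Hax. specialize (Hdl Hax). split; auto.
    apply (perron_integrable_cont _ Fc). lra. apply Fc_gcont. intros u Hu. rewrite Fc_eq; auto. lra.
  - intros Hxb. specialize (Hdr Hxb).
    apply (is_lim_ext (LR Fc x d)).
    { intros s. symmetry. apply lap_right_LR; auto; lra. }
    apply (lim_of_est _ _ m). intros k Hk. apply right_est; auto. lra.
  - intros Hax. specialize (Hdl Hax).
    apply (is_lim_ext (LR (Cr a b F) (- x) d)).
    { intros s. symmetry. apply lap_left_LR; auto; lra. }
    apply (lim_of_est _ _ m). intros k Hk. apply left_est; auto. lra.
Qed.

End Final.

Theorem theorem5p5 (a b : R) (f F : R -> R) :
  a < b ->
  laplace_integrable a b f ->
  F a = 0 ->
  (forall x, a < x <= b -> F x = laplace_int a x f) ->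
  exists N : R -> Prop, null_set N /\
    forall x, a <= x <= b -> ~ N x -> LD1 a b F x (f x).
Proof.
  intros Hab [I HI] HFa HF.
  exists (Nset a b f F). split.
  - apply (Nset_null a b I f F Hab HI HFa HF).
  - intros x Hx HN. apply (LD1_good a b I f F Hab HI HFa HF x Hx HN).
Qed.
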